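(* Let $H$ be a real Hilbert space, $f:H\to\mathbb{R}\cup\{+\infty\}$ a lower semicontinuous function, $\bar x\in\operatorname{dom}f$ and $p\in\partial_pf(\bar x)$, and suppose $f$ is twice epi-differentiable (in the sense of Mosco) at $\bar x$ relative to $p$. Then for every $h\in\operatorname{dom}\partial f''_-(\bar x,p,\cdot)$, $$\sup\{\langle w,h\rangle: w\in\partial^2_M f(\bar x,p)(h)\}\le f''_-(\bar x,p,h),$$ equivalently $\partial^2_Mf(\bar x,p)(h)\subset\{w\in H:\langle w,h\rangle\le f''_-(\bar x,p,h)\}$.
   Context: Weak convergence is denoted $\stackrel{w}{\to}$. Proximal subdifferential: $\zeta\in\partial_p f(x)$ iff there exist $\sigma,\delta>0$ with $f(y)\ge f(x)+\langle \zeta,y-x\rangle-\frac{\sigma}{2}\|y-x\|^2$ whenever $\|y-x\|<\delta$. Limiting subdifferential of a lower semicontinuous $g$: $\zeta\in\partial g(x)$ iff there exist $x_n\to x$ with $g(x_n)\to g(x)$ and $\zeta_n\stackrel{w}{\to}\zeta$ with $\zeta_n\in\partial_p g(x_n)$; $\operatorname{dom}\partial g=\{x:\partial g(x)\ne\emptyset\}$. $\Delta_2 f(\bar x,p,t,u):=\frac{f(\bar x+tu)-f(\bar x)-t\langle p,u\rangle}{\frac12 t^2}$, $f''_-(\bar x,p,h):=\liminf_{h'\to h,\,t\downarrow0}\Delta_2 f(\bar x,p,t,h')$, and $\partial f''_-(\bar x,p,\cdot)(h)$ is the limiting subdifferential of $h\mapsto f''_-(\bar x,p,h)$. Mixed contingent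 cone: $(h,z)\in T_M(\operatorname{gph}\partial_p f,(\bar x,p))$ iff there exist $t_n\to0^+$, $h_n\to h$ in norm, $z_n\stackrel{w}{\to}z$ with $p+t_nz_n\in\partial_pf(\bar x+t_nh_n)$ for all $n$. $N_M(\operatorname{gph}\partial_pf,(\bar x,p)):=\{(a,b)\in H\times H:\langle a,h\rangle+\langle b,z\rangle\le0\ \forall (h,z)\in T_M(\operatorname{gph}\partial_pf,(\bar x,p))\}$. Second-order mixed proximal subdifferential: $\partial^2_Mf(\bar x,p)(h):=\{z:(z,-h)\in N_M(\operatorname{gph}\partial_pf,(\bar x,p))\}$. Twice epi-differentiability (Mosco sense) at $\bar x$ relative to $p$: there is a proper function $\phi$ such that for every $t_n\to0^+$, the epigraphs of $\Delta_2f(\bar x,p,t_n,\cdot)$ Mosco converge to $\operatorname{epi}\phi$, where $C_n\to C$ in the Mosco sense means $C$ equals both the set of norm limits of sequences $x_n\in C_n$ and the set of weak limits of subsequences $x_{n_k}\in C_{n_k}$. *)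

(* Defs.v *)
From Stdlib Require Import Reals Lra ClassicalEpsilon.
Open Scope R_scope.

Record Hilbert := {
  hcar :> Type;
  hadd : hcar -> hcar -> hcar;
  hscal : R -> hcar -> hcar;
  hzero : hcar;
  inner : hcar -> hcar -> R;
  hadd_assoc : forall x y z, hadd x (hadd y z) = hadd (hadd x y) z;
  hadd_comm : forall x y, hadd x y = hadd y x;
  hadd_0 : forall x, hadd x hzero = x;
  hadd_opp : forall x, hadd x (hscal (-1) x) = hzero;
  hscal_assoc : forall a b x, hscal a (hscal b x) = hscal (a * b) x;
  hscal_1 : forall x, hscal 1 x = x;
  hscal_distr_l : forall a x y, hscal a (hadd x y) = hadd (hscal a x) (hscal a y);
  hscal_distr_r : forall a b x, hscal (a + b) x = hadd (hscal a x) (hscal b x);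
  inner_sym : forall x y, inner x y = inner y x;
  inner_add_l : forall x y z, inner (hadd x y) z = inner x z + inner y z;
  inner_scal_l : forall a x y, inner (hscal a x) y = a * inner x y;
  inner_pos : forall x, 0 <= inner x x;
  inner_def : forall x, inner x x = 0 -> x = hzero;
  hcomplete : forall u : nat -> hcar,
    (forall eps, eps > 0 -> exists N, forall m n, (N <= m)%nat -> (N <= n)%nat ->
        sqrt (inner (hadd (u m) (hscal (-1) (u n))) (hadd (u m) (hscal (-1) (u n)))) < eps) ->
    exists l, forall eps, eps > 0 -> exists N, forall n, (N <= n)%nat ->
        sqrt (inner (hadd (u n) (hscal (-1) l)) (hadd (u n) (hscal (-1) l))) < eps
}.

Arguments hadd {h}.
Arguments hscal {h}.
Arguments hzero {h}.
Arguments inner {h}.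

Definition hsub {E : Hilbert} (x y : E) : E := hadd x (hscal (-1) y).
Definition hnorm {E : Hilbert} (x : E) : R := sqrt (inner x x).

Definition norm_conv {E : Hilbert} (u : nat -> E) (l : E) : Prop :=
  forall eps, eps > 0 -> exists N, forall n, (N <= n)%nat -> hnorm (hsub (u n) l) < eps.
Definition weak_conv {E : Hilbert} (u : nat -> E) (l : E) : Prop :=
  forall v : E, Un_cv (fun n => inner (u n) v) (inner l v).

Inductive ER := Fin (r : R) | PInf | MInf.

Definition ERle (x y : ER) : Prop :=
  match x, y with
  | MInf, _ => True
  | _, PInf => True
  | Fin a, Fin b => a <= b
  | _, _ => False
  end.
Definition ERlt (x y : ER) : Prop := ERle x y /\ x <> y.

Definition is_glb (P : ER -> Prop) (l : ER) : Prop :=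
  (forall y, P y -> ERle l y) /\ (forall m, (forall y, P y -> ERle m y) -> ERle m l).
Definition is_lub (P : ER -> Prop) (l : ER) : Prop :=
  (forall y, P y -> ERle y l) /\ (forall m, (forall y, P y -> ERle y m) -> ERle l m).

(* infimum / supremum of a set of extended reals (they always exist) *)
Definition ERinf (P : ER -> Prop) : ER := epsilon (inhabits PInf) (is_glb P).
Definition ERsup (P : ER -> Prop) : ER := epsilon (inhabits PInf) (is_lub P).

Definition lsc {E : Hilbert} (g : E -> ER) : Prop :=
  forall (x : E) (r : R), ERlt (Fin r) (g x) ->
    exists delta, delta > 0 /\
      forall y, hnorm (hsub y x) < delta -> ERlt (Fin r) (g y).

Definition prox_sub {E : Hilbert} (g : E -> ER) (x zeta : E) : Prop :=
  exists gx, g x = Fin gx /\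
  exists sigma delta, sigma > 0 /\ delta > 0 /\
    forall y, hnorm (hsub y x) < delta ->
      ERle (Fin (gx + inner zeta (hsub y x) - sigma / 2 * (hnorm (hsub y x)) ^ 2)) (g y).

Definition lim_sub {E : Hilbert} (g : E -> ER) (x zeta : E) : Prop :=
  exists gx, g x = Fin gx /\
  exists (xn zn : nat -> E) (gxn : nat -> R),
    norm_conv xn x /\
    (forall n, g (xn n) = Fin (gxn n)) /\ Un_cv gxn gx /\
    weak_conv zn zeta /\
    (forall n, prox_sub g (xn n) (zn n)).

Definition dom_lim_sub {E : Hilbert} (g : E -> ER) (x : E) : Prop :=
  exists zeta, lim_sub g x zeta.

Definition Delta2 {E : Hilbert} (f : E -> ER) (xb p : E) (t : R) (u : E) : ER :=
  match f (hadd xb (hscal t u)), f xb with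
  | Fin a, Fin b => Fin ((a - b - t * inner p u) / (t ^ 2 / 2))
  | _, _ => PInf
  end.

(* f''_-(xb,p,h) = liminf_{h' -> h, t downarrow 0} Delta2 f(xb,p,t,h')
   = sup_{delta>0} inf { Delta2 f(xb,p,t,h') : 0<t<delta, |h'-h|<delta } *)
Definition f2lower {E : Hilbert} (f : E -> ER) (xb p : E) (h : E) : ER :=
  ERsup (fun v => exists delta, delta > 0 /\
     v = ERinf (fun w => exists (t : R) (h' : E),
            0 < t < delta /\ hnorm (hsub h' h) < delta /\ w = Delta2 f xb p t h')).

Definition epi {E : Hilbert} (g : E -> ER) : E * R -> Prop :=
  fun z => ERle (g (fst z)) (Fin (snd z)).

Definition proper {E : Hilbert} (g : E -> ER) : Prop :=
  (forall u, g u <> MInf) /\ exists u r, g u = Fin r.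

Definition Mosco_conv {E : Hilbert} (C : nat -> E * R -> Prop) (C0 : E * R -> Prop) : Prop :=
  forall z : E * R,
    (C0 z <-> exists zs : nat -> E * R,
        (forall n, C n (zs n)) /\
        norm_conv (fun n => fst (zs n)) (fst z) /\ Un_cv (fun n => snd (zs n)) (snd z)) /\
    (C0 z <-> exists (phi : nat -> nat) (zs : nat -> E * R),
        (forall k, (phi k < phi (S k))%nat) /\
        (forall k, C (phi k) (zs k)) /\
        weak_conv (fun k => fst (zs k)) (fst z) /\ Un_cv (fun k => snd (zs k)) (snd z)).

Definition twice_epi_diff_Mosco {E : Hilbert} (f : E -> ER) (xb p : E) : Prop :=
  exists phi : E -> ER, proper phi /\
    forall tn : nat -> R, (forall n, 0 < tn n) -> Un_cv tn 0 ->
      Mosco_conv (fun n => epi (Delta2 f xb p (tn n))) (epi phi).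

(* mixed contingent cone to gph (prox_sub f) at (xb,p) *)
Definition T_M {E : Hilbert} (f : E -> ER) (xb p : E) (h z : E) : Prop :=
  exists (tn : nat -> R) (hn zn : nat -> E),
    (forall n, 0 < tn n) /\ Un_cv tn 0 /\
    norm_conv hn h /\ weak_conv zn z /\
    forall n, prox_sub f (hadd xb (hscal (tn n) (hn n))) (hadd p (hscal (tn n) (zn n))).

Definition N_M {E : Hilbert} (f : E -> ER) (xb p : E) (a b : E) : Prop :=
  forall h z, T_M f xb p h z -> inner a h + inner b z <= 0.

Definition d2_M {E : Hilbert} (f : E -> ER) (xb p h w : E) : Prop :=
  N_M f xb p w (hscal (-1) h).

(* Main.v *)
Require Import Defs.
From Stdlib Require Import Reals Lra Lia Psatz ClassicalEpsilon Classical ZArith.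
Open Scope R_scope.
Arguments hadd_assoc {h}. Arguments hadd_comm {h}. Arguments hadd_0 {h}. Arguments hadd_opp {h}.
Arguments hscal_assoc {h}. Arguments hscal_1 {h}. Arguments hscal_distr_l {h}. Arguments hscal_distr_r {h}.
Arguments inner_sym {h}. Arguments inner_add_l {h}. Arguments inner_scal_l {h}. Arguments inner_pos {h}.
Arguments inner_def {h}. Arguments hcomplete {h}.

Lemma inner_add_r {E : Hilbert} (x y z : E) : inner x (hadd y z) = inner x y + inner x z.
Proof. rewrite inner_sym, inner_add_l, (inner_sym y), (inner_sym z); ring. Qed.
Lemma inner_scal_r {E : Hilbert} a (x y : E) : inner x (hscal a y) = a * inner x y.
Proof. rewrite inner_sym, inner_scal_l, inner_sym; ring. Qed.
Lemma inner_zero_l {E : Hilbert} (z : E) : inner hzero z = 0.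
Proof.
  assert (H : inner (hadd (@hzero E) hzero) z = inner hzero z) by now rewrite hadd_0.
  rewrite inner_add_l in H; lra.
Qed.
Lemma inner_zero_r {E : Hilbert} (z : E) : inner z hzero = 0.
Proof. rewrite inner_sym; apply inner_zero_l. Qed.
Lemma inner_sub_l {E : Hilbert} (x y z : E) : inner (hsub x y) z = inner x z - inner y z.
Proof. unfold hsub; rewrite inner_add_l, inner_scal_l; ring. Qed.
Lemma inner_sub_r {E : Hilbert} (x y z : E) : inner z (hsub x y) = inner z x - inner z y.
Proof. rewrite inner_sym, inner_sub_l, !(inner_sym z); ring. Qed.

Lemma hsub_zero_eq {E : Hilbert} (a b : E) : hsub a b = hzero -> a = b.
Proof.
  unfold hsub; intro H.
  assert (a = hadd (hadd a (hscal (-1) b)) b) as ->.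
  { rewrite <- hadd_assoc, (hadd_comm _ b), hadd_opp, hadd_0; reflexivity. }
  rewrite H, hadd_comm, hadd_0; reflexivity.
Qed.

Lemma hext {E : Hilbert} (a b : E) : (forall z, inner a z = inner b z) -> a = b.
Proof.
  intro H; apply hsub_zero_eq, inner_def.
  rewrite inner_sub_l, H; ring.
Qed.

Ltac iexp := repeat (rewrite ?inner_add_l, ?inner_scal_l, ?inner_sub_l, ?inner_zero_l).
Ltac hring := apply hext; intro; iexp; ring.

Definition nsq {E : Hilbert} (x : E) := inner x x.

Lemma hnorm_sq {E : Hilbert} (x : E) : hnorm x * hnorm x = inner x x.
Proof. unfold hnorm; apply sqrt_sqrt, inner_pos. Qed.
Lemma hnorm_pos {E : Hilbert} (x : E) : 0 <= hnorm x.
Proof. unfold hnorm; apply sqrt_pos. Qed.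
Lemma hnorm_pow2 {E : Hilbert} (x : E) : hnorm x ^ 2 = inner x x.
Proof. rewrite <- hnorm_sq; ring. Qed.

Lemma hnorm_le_sq {E : Hilbert} (x : E) r : 0 <= r -> inner x x <= r * r -> hnorm x <= r.
Proof. intros Hr H; unfold hnorm. rewrite <- (sqrt_square r) by lra. apply sqrt_le_1_alt; lra. Qed.
Lemma hnorm_lt_sq {E : Hilbert} (x : E) r : 0 <= r -> inner x x < r * r -> hnorm x < r.
Proof. intros Hr H; unfold hnorm. rewrite <- (sqrt_square r) by lra. apply sqrt_lt_1_alt; split; [apply inner_pos|lra]. Qed.

Lemma Rabs_le_between' (a b : R) : Rabs a <= b -> - b <= a <= b.
Proof. unfold Rabs; destruct (Rcase_abs a); intros; split; lra. Qed.

Lemma CS_sq {E : Hilbert} (x y : E) : inner x y * inner x y <= inner x x * inner y y.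
Proof.
  destruct (Req_dec (inner y y) 0) as [H0|H0].
  - apply inner_def in H0; subst y. rewrite !inner_zero_r; lra.
  - pose (t := - inner x y / inner y y).
    assert (Hp := inner_pos (hadd x (hscal t y))).
    rewrite inner_add_l, !inner_add_r, !inner_scal_l, !inner_scal_r, (inner_sym y x) in Hp.
    assert (Hy := inner_pos y).
    assert (Hy' : 0 < inner y y) by lra.
    match type of Hp with 0 <= ?e => assert (Hk : e = (inner x x * inner y y - inner x y * inner x y) / inner y y) by (unfold t; field; lra) end.
    rewrite Hk in Hp.
    assert (Hm := Rmult_le_compat_r (inner y y) _ _ Hy Hp).
    unfold Rdiv in Hm. rewrite Rmult_0_l, Rmult_assoc, Rinv_l, Rmult_1_r in Hm by lra. lra.
Qed.

Lemma CS {E : Hilbert} (x y : E) : Rabs (inner x y) <= hnorm x * hnorm y.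
Proof.
  rewrite <- (Rabs_pos_eq (hnorm x * hnorm y)) by (apply Rmult_le_pos; apply hnorm_pos).
  apply Rsqr_le_abs_0. unfold Rsqr.
  replace (hnorm x * hnorm y * (hnorm x * hnorm y)) with ((hnorm x * hnorm x) * (hnorm y * hnorm y)) by ring.
  rewrite !hnorm_sq. apply CS_sq.
Qed.

Lemma hnorm_scal {E : Hilbert} a (x : E) : hnorm (hscal a x) = Rabs a * hnorm x.
Proof.
  unfold hnorm. rewrite inner_scal_l, inner_scal_r, <- Rmult_assoc.
  rewrite sqrt_mult_alt by (apply Rle_0_sqr). rewrite <- (sqrt_Rsqr_abs a). reflexivity.
Qed.

Lemma hnorm_add {E : Hilbert} (x y : E) : hnorm (hadd x y) <= hnorm x + hnorm y.
Proof.
  apply hnorm_le_sq. pose proof (hnorm_pos x); pose proof (hnorm_pos y); lra.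
  rewrite inner_add_l, !inner_add_r, (inner_sym y x).
  pose proof (CS x y) as H. apply Rabs_le_between' in H.
  rewrite <- (hnorm_sq x), <- (hnorm_sq y). nra.
Qed.

Lemma hnorm_zero {E : Hilbert} : hnorm (@hzero E) = 0.
Proof. unfold hnorm. rewrite inner_zero_l. apply sqrt_0. Qed.

Lemma hnorm_eq0 {E : Hilbert} (x : E) : hnorm x = 0 -> x = hzero.
Proof. intro H. apply inner_def. rewrite <- hnorm_sq, H. ring. Qed.

Lemma hsub_add {E : Hilbert} (x y z : E) : hsub x z = hadd (hsub x y) (hsub y z).
Proof. hring. Qed.

Lemma hnorm_tri {E : Hilbert} (x y z : E) : hnorm (hsub x z) <= hnorm (hsub x y) + hnorm (hsub y z).
Proof. rewrite (hsub_add x y z). apply hnorm_add. Qed.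

Lemma hnorm_sub_sym {E : Hilbert} (x y : E) : hnorm (hsub x y) = hnorm (hsub y x).
Proof.
  replace (hsub x y) with (hscal (-1) (hsub y x)) by hring.
  rewrite hnorm_scal. replace (Rabs (-1)) with 1 by (rewrite Rabs_left; lra). ring.
Qed.

Lemma hnorm_sub_self {E : Hilbert} (x : E) : hnorm (hsub x x) = 0.
Proof. replace (hsub x x) with (@hzero E) by hring. apply hnorm_zero. Qed.

Lemma hnorm_sub0 {E : Hilbert} (x : E) : hsub x hzero = x.
Proof. hring. Qed.

Lemma inner_le {E : Hilbert} (x y : E) : inner x y <= hnorm x * hnorm y.
Proof. pose proof (CS x y). apply Rabs_le_between' in H. lra. Qed.
Lemma inner_ge {E : Hilbert} (x y : E) : - (hnorm x * hnorm y) <= inner x y.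
Proof. pose proof (CS x y). apply Rabs_le_between' in H. lra. Qed.

Lemma complete {E : Hilbert} (u : nat -> E) :
  (forall eps, eps > 0 -> exists N, forall m n, (N <= m)%nat -> (N <= n)%nat -> hnorm (hsub (u m) (u n)) < eps) ->
  exists l, norm_conv u l.
Proof. intro H. apply (hcomplete u) in H. exact H. Qed.

Lemma norm_conv_unique {E : Hilbert} (u : nat -> E) a b : norm_conv u a -> norm_conv u b -> a = b.
Proof.
  intros Ha Hb. apply hsub_zero_eq. apply hnorm_eq0.
  apply Rle_antisym; [|apply hnorm_pos].
  apply Rnot_lt_le; intro Hlt.
  destruct (Ha (hnorm (hsub a b) / 2)) as [N1 H1]; [lra|].
  destruct (Hb (hnorm (hsub a b) / 2)) as [N2 H2]; [lra|].
  specialize (H1 (max N1 N2) (Nat.le_max_l _ _)); specialize (H2 (max N1 N2) (Nat.le_max_r _ _)).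
  pose proof (hnorm_tri a (u (max N1 N2)) b). rewrite (hnorm_sub_sym a (u (max N1 N2))) in H. lra.
Qed.

Lemma norm_conv_inner {E : Hilbert} (u : nat -> E) l v : norm_conv u l -> Un_cv (fun n => inner (u n) v) (inner l v).
Proof.
  intros H eps Heps.
  destruct (H (eps / (hnorm v + 1))) as [N HN].
  { apply Rdiv_lt_0_compat; pose proof (hnorm_pos v); lra. }
  exists N; intros n Hn. unfold Rdist.
  replace (inner (u n) v - inner l v) with (inner (hsub (u n) l) v) by (rewrite inner_sub_l; ring).
  eapply Rle_lt_trans; [apply CS|].
  specialize (HN n ltac:(lia)). pose proof (hnorm_pos v). pose proof (hnorm_pos (hsub (u n) l)).
  apply Rle_lt_trans with (hnorm (hsub (u n) l) * (hnorm v + 1)); [nra|].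
  apply Rmult_lt_compat_r with (r := hnorm v + 1) in HN; [|lra].
  unfold Rdiv in HN; rewrite Rmult_assoc, Rinv_l, Rmult_1_r in HN; lra.
Qed.

Lemma norm_conv_weak {E : Hilbert} (u : nat -> E) l : norm_conv u l -> weak_conv u l.
Proof. intros H v; now apply norm_conv_inner. Qed.

Lemma norm_conv_hnorm {E : Hilbert} (u : nat -> E) l c : norm_conv u l -> Un_cv (fun n => hnorm (hsub (u n) c)) (hnorm (hsub l c)).
Proof.
  intros H eps Heps. destruct (H eps Heps) as [N HN]. exists N; intros n Hn.
  unfold Rdist. specialize (HN n Hn).
  pose proof (hnorm_tri (u n) l c). pose proof (hnorm_tri l (u n) c).
  rewrite (hnorm_sub_sym l (u n)) in H1. apply Rabs_def1; lra.
Qed.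

Lemma lim_le_ev (u : nat -> R) l c : Un_cv u l -> (exists N, forall n, (N <= n)%nat -> u n <= c) -> l <= c.
Proof.
  intros Hu [N HN]. apply Rnot_lt_le; intro Hlt.
  destruct (Hu ((l - c)/2)) as [M HM]; [lra|].
  specialize (HM (max N M) (Nat.le_max_r _ _)). specialize (HN (max N M) (Nat.le_max_l _ _)).
  unfold Rdist in HM. apply Rabs_def2 in HM. lra.
Qed.
Lemma lim_ge_ev (u : nat -> R) l c : Un_cv u l -> (exists N, forall n, (N <= n)%nat -> c <= u n) -> c <= l.
Proof.
  intros Hu [N HN]. apply Rnot_lt_le; intro Hlt.
  destruct (Hu ((c - l)/2)) as [M HM]; [lra|].
  specialize (HM (max N M) (Nat.le_max_r _ _)). specialize (HN (max N M) (Nat.le_max_l _ _)).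
  unfold Rdist in HM. apply Rabs_def2 in HM. lra.
Qed.
Lemma cv_bounded (u : nat -> R) l : Un_cv u l -> exists M, forall n, Rabs (u n) <= M.
Proof. intro H. destruct (maj_by_pos u (exist _ l H)) as [M [_ HM]]. eauto. Qed.
Lemma cv_ev (u : nat -> R) l a b : Un_cv u l -> a < l < b -> exists N, forall n, (N <= n)%nat -> a < u n < b.
Proof.
  intros Hu Hab. destruct (Hu (Rmin (l - a) (b - l))) as [N HN].
  { apply Rmin_pos; lra. }
  exists N; intros n Hn. specialize (HN n Hn). unfold Rdist in HN. apply Rabs_def2 in HN.
  pose proof (Rmin_l (l-a) (b-l)); pose proof (Rmin_r (l-a) (b-l)). lra.
Qed.
Lemma CV_const (c : R) : Un_cv (fun _ => c) c.
Proof. intros eps He. exists O. intros. unfold Rdist. rewrite Rminus_diag, Rabs_R0. lra. Qed.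

Lemma real_glb (S : R -> Prop) : (exists r, S r) -> (exists m, forall r, S r -> m <= r) ->
  exists g, (forall r, S r -> g <= r) /\ (forall a, (forall r, S r -> a <= r) -> a <= g).
Proof.
  intros [r0 Hr0] [m Hm].
  destruct (completeness (fun x => S (- x))) as [l [Hl1 Hl2]].
  - exists (- m). intros x Hx. specialize (Hm _ Hx). lra.
  - exists (- r0). now rewrite Ropp_involutive.
  - exists (- l). split.
    + intros r Hr. assert (H : S (- - r)) by now rewrite Ropp_involutive. specialize (Hl1 _ H). lra.
    + intros a Ha. assert (H : l <= - a). { apply Hl2. intros x Hx. specialize (Ha _ Hx). lra. } lra.
Qed.

Lemma ER_glb_ex (P : ER -> Prop) : exists l, is_glb P l.
Proof.
  destruct (classic (P MInf)) as [HM|HM].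
  { exists MInf. split; [intros; exact I|]. intros m Hm. apply Hm, HM. }
  destruct (classic (exists r, P (Fin r))) as [HF|HF].
  - destruct (classic (exists m, forall r, P (Fin r) -> m <= r)) as [HB|HB].
    + destruct (real_glb (fun r => P (Fin r)) HF HB) as [g [Hg1 Hg2]].
      exists (Fin g). split.
      * intros [y| |] Hy; simpl; auto.
      * intros [a| |] Ha; simpl; auto.
        -- apply Hg2. intros r Hr. exact (Ha _ Hr).
        -- destruct HF as [r Hr]. exact (Ha _ Hr).
    + exists MInf. split; [intros; exact I|].
      intros [a| |] Ha; simpl; auto.
      * exfalso; apply HB. exists a. intros r Hr. exact (Ha _ Hr).
      * destruct HF as [r Hr]. exact (Ha _ Hr).
  - exists PInf. split.
    + intros [y| |] Hy; simpl; auto. apply HF; eauto.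
    + intros [a| |] Ha; simpl; auto.
Qed.

Lemma ER_lub_ex (P : ER -> Prop) : exists l, Defs.is_lub P l.
Proof.
  destruct (ER_glb_ex (fun y => P (match y with Fin r => Fin (-r) | PInf => MInf | MInf => PInf end))) as [l [H1 H2]].
  exists (match l with Fin r => Fin (-r) | PInf => MInf | MInf => PInf end). split.
  - intros y Hy. specialize (H1 (match y with Fin r => Fin (-r) | PInf => MInf | MInf => PInf end)).
    destruct y as [y| |]; simpl in H1; rewrite ?Ropp_involutive in H1; specialize (H1 Hy);
      destruct l as [l| |]; simpl in *; auto; lra.
  - intros m Hm. specialize (H2 (match m with Fin r => Fin (-r) | PInf => MInf | MInf => PInf end)).
    assert (H : ERle (match m with Fin r => Fin (-r) | PInf => MInf | MInf => PInf end) l).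
    { apply H2. intros y Hy. specialize (Hm _ Hy). destruct y as [y| |], m as [m| |]; simpl in *; auto; lra. }
    destruct l as [l| |], m as [m| |]; simpl in *; auto; lra.
Qed.

Lemma ERinf_spec (P : ER -> Prop) : is_glb P (ERinf P).
Proof. unfold ERinf. apply epsilon_spec. apply ER_glb_ex. Qed.
Lemma ERsup_spec (P : ER -> Prop) : Defs.is_lub P (ERsup P).
Proof. unfold ERsup. apply epsilon_spec. apply ER_lub_ex. Qed.

Lemma ERinf_le (P : ER -> Prop) y : P y -> ERle (ERinf P) y.
Proof. apply (proj1 (ERinf_spec P)). Qed.
Lemma le_ERinf (P : ER -> Prop) m : (forall y, P y -> ERle m y) -> ERle m (ERinf P).
Proof. apply (proj2 (ERinf_spec P)). Qed.
Lemma le_ERsup (P : ER -> Prop) y : P y -> ERle y (ERsup P).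
Proof. apply (proj1 (ERsup_spec P)). Qed.
Lemma ERsup_le (P : ER -> Prop) m : (forall y, P y -> ERle y m) -> ERle (ERsup P) m.
Proof. apply (proj2 (ERsup_spec P)). Qed.

Lemma ERle_trans x y z : ERle x y -> ERle y z -> ERle x z.
Proof. destruct x as [x| |], y as [y| |], z as [z| |]; simpl; auto; try lra; tauto. Qed.
Lemma ERle_refl x : ERle x x.
Proof. destruct x; simpl; auto; lra. Qed.

Lemma ERle_eps X a : (forall eps, eps > 0 -> ERle X (Fin (a + eps))) -> ERle X (Fin a).
Proof.
  intro H. destruct X as [x| |]; simpl; auto.
  - apply Rnot_lt_le; intro Hlt. specialize (H ((x - a)/2) ltac:(lra)). simpl in H. lra.
  - apply (H 1); lra.
Qed.

Lemma ERle_eps' X a : (forall eps, eps > 0 -> ERle (Fin (a - eps)) X) -> ERle (Fin a) X.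
Proof.
  intro H. destruct X as [x| |]; simpl; auto.
  - apply Rnot_lt_le; intro Hlt. specialize (H ((a - x)/2) ltac:(lra)). simpl in H. lra.
  - apply (H 1); lra.
Qed.

Lemma ERnle_lt X c : ~ ERle X (Fin c) -> ERlt (Fin c) X.
Proof.
  destruct X as [x| |]; simpl; intro H.
  - split; simpl; [lra|]. intro E; injection E; lra.
  - split; simpl; auto. discriminate.
  - tauto.
Qed.

Lemma ERinf_approx (P : ER -> Prop) c eps : ERle (ERinf P) (Fin c) -> eps > 0 ->
  exists y, P y /\ ERle y (Fin (c + eps)).
Proof.
  intros H He. apply NNPP; intro Hn.
  assert (H2 : ERle (Fin (c + eps)) (ERinf P)).
  { apply le_ERinf. intros y Hy. destruct (classic (ERle y (Fin (c+eps)))) as [Hl|Hl].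
    - exfalso; apply Hn; eauto.
    - apply ERnle_lt in Hl. apply Hl. }
  pose proof (ERle_trans _ _ _ H2 H). simpl in H0. lra.
Qed.



Definition Mbnd {E : Hilbert} (z : nat -> E) (v : E) : R :=
  epsilon (inhabits 0) (fun M => forall n, Rabs (inner (z n) v) <= M).

Lemma Mbnd_spec {E : Hilbert} (z : nat -> E) zeta v : weak_conv z zeta ->
  forall n, Rabs (inner (z n) v) <= Mbnd z v.
Proof.
  intro H. unfold Mbnd. apply epsilon_spec. apply (cv_bounded _ _ (H v)).
Qed.

Definition gh_k {E : Hilbert} (z : nat -> E) (j : nat) (s : E) : nat :=
  epsilon (inhabits 0%nat) (fun n => hnorm (z n) * (/4) ^ j > 3 * (Mbnd z s + INR j + 1)).
Definition gh_c {E : Hilbert} (z : nat -> E) (j : nat) (s : E) : R :=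
  (/4) ^ j / hnorm (z (gh_k z j s)).
Fixpoint gh_s {E : Hilbert} (z : nat -> E) (j : nat) : E :=
  match j with
  | O => hzero
  | S j => let s := gh_s z j in hadd s (hscal (gh_c z j s) (z (gh_k z j s)))
  end.

Lemma pow4_pos j : 0 < (/4) ^ j.
Proof. apply pow_lt; lra. Qed.

Lemma weak_bounded {E : Hilbert} (z : nat -> E) zeta : weak_conv z zeta -> exists B, forall n, hnorm (z n) <= B.
Proof.
  intro Hw. apply NNPP; intro Hnb.
  assert (Hub : forall B, exists n, hnorm (z n) > B).
  { intro B. apply NNPP; intro H2. apply Hnb. exists B. intro n. apply Rnot_lt_le. intro H3. apply H2; eauto. }
  assert (Hk : forall j s, hnorm (z (gh_k z j s)) * (/4) ^ j > 3 * (Mbnd z s + INR j + 1)).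
  { intros j s. unfold gh_k. apply epsilon_spec.
    destruct (Hub (3 * (Mbnd z s + INR j + 1) / (/4) ^ j)) as [n0 Hn0].
    exists n0. pose proof (pow4_pos j).
    apply Rmult_gt_compat_r with (r := (/4)^j) in Hn0; [|lra].
    unfold Rdiv in Hn0. rewrite Rmult_assoc, Rinv_l, Rmult_1_r in Hn0 by lra. lra. }
  assert (HM0 : forall v, 0 <= Mbnd z v).
  { intro v. eapply Rle_trans; [apply Rabs_pos| apply (Mbnd_spec z zeta v Hw 0)]. }
  set (s := gh_s z).
  assert (Hstep : forall j, hnorm (hsub (s (S j)) (s j)) = (/4) ^ j).
  { intro j. unfold s; simpl. set (sj := gh_s z j).
    replace (hsub (hadd sj (hscal (gh_c z j sj) (z (gh_k z j sj)))) sj) with (hscal (gh_c z j sj) (z (gh_k z j sj))) by hring.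
    rewrite hnorm_scal. unfold gh_c.
    specialize (Hk j sj). specialize (HM0 sj). pose proof (pos_INR j). pose proof (pow4_pos j).
    assert (Hz : 0 < hnorm (z (gh_k z j sj))) by (pose proof (hnorm_pos (z (gh_k z j sj))); nra).
    rewrite Rabs_pos_eq by (apply Rlt_le, Rdiv_lt_0_compat; lra). field. lra. }
  assert (Hcau : forall k m, (k <= m)%nat -> hnorm (hsub (s m) (s k)) <= 4/3 * ((/4)^k - (/4)^m)).
  { intros k m Hkm. induction Hkm.
    - rewrite hnorm_sub_self. lra.
    - eapply Rle_trans; [apply (hnorm_tri _ (s m))|]. rewrite Hstep. simpl. lra. }
  destruct (complete s) as [v Hv].
  { intros eps Heps. assert (Hlim := pow_lt_1_zero (/4) ltac:(rewrite Rabs_pos_eq; lra) (3/4*eps) ltac:(lra)).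
    destruct Hlim as [N HN]. exists N. intros m n Hm Hn.
    destruct (Nat.le_ge_cases m n) as [H|H].
    - rewrite hnorm_sub_sym. eapply Rle_lt_trans; [apply Hcau; auto|].
      specialize (HN m Hm). rewrite Rabs_pos_eq in HN by (apply Rlt_le, pow4_pos). pose proof (pow4_pos n). lra.
    - eapply Rle_lt_trans; [apply Hcau; auto|].
      specialize (HN n Hn). rewrite Rabs_pos_eq in HN by (apply Rlt_le, pow4_pos). pose proof (pow4_pos m). lra. }
  assert (Hv' : forall j, INR j + 1 <= inner (z (gh_k z j (s j))) v).
  { intro j. set (u := z (gh_k z j (s j))).
    apply (lim_ge_ev (fun m => inner u (s m))).
    { rewrite inner_sym. eapply Un_cv_ext; [|apply (norm_conv_inner s v u Hv)]. intro; apply inner_sym. }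
    exists (S j). intros m Hm.
    replace (inner u (s m)) with (inner u (s j) + gh_c z j (s j) * inner u u + inner u (hsub (s m) (s (S j)))).
    2:{ assert (Hsj : s (S j) = hadd (s j) (hscal (gh_c z j (s j)) u)) by reflexivity.
        rewrite inner_sub_r, Hsj, inner_add_r, inner_scal_r. ring. }
    pose proof (Hcau _ _ Hm) as Hc. pose proof (pow4_pos m).
    pose proof (inner_ge u (hsub (s m) (s (S j)))) as Hi.
    pose proof (Mbnd_spec z zeta (s j) Hw (gh_k z j (s j))) as Hb. apply Rabs_le_between' in Hb. fold u in Hb.
    specialize (Hk j (s j)). fold u in Hk.
    pose proof (hnorm_pos u).
    assert (Hz : 0 < hnorm u) by (specialize (HM0 (s j)); pose proof (pos_INR j); pose proof (pow4_pos j); nra).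
    assert (Hcu : gh_c z j (s j) * inner u u = hnorm u * (/4)^j).
    { unfold gh_c. fold u. rewrite <- hnorm_sq. field. lra. }
    rewrite Hcu.
    assert (hnorm u * hnorm (hsub (s m) (s (S j))) <= hnorm u * ((/4)^j / 3)).
    { apply Rmult_le_compat_l; [lra|]. simpl in Hc. lra. }
    replace (hnorm u * ((/4)^j / 3)) with (hnorm u * (/4)^j / 3) in H0 by field.
    specialize (HM0 (s j)). pose proof (pos_INR j).
    lra. }
  destruct (INR_unbounded (Mbnd z v)) as [j Hj].
  specialize (Hv' j). pose proof (Mbnd_spec z zeta v Hw (gh_k z j (s j))) as Hb.
  apply Rabs_le_between' in Hb. lra.
Qed.

Definition sincr (th : nat -> nat) := forall k, (th k < th (S k))%nat.

Lemma sincr_ge th : sincr th -> forall k, (k <= th k)%nat.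
Proof. intros H k; induction k; [lia|]. specialize (H k); lia. Qed.
Lemma sincr_lt th : sincr th -> forall i j, (i < j)%nat -> (th i < th j)%nat.
Proof. intros H i j Hij; induction Hij; [apply H|]. specialize (H m); lia. Qed.
Lemma sincr_le th : sincr th -> forall i j, (i <= j)%nat -> (th i <= th j)%nat.
Proof. intros H i j Hij. destruct (Nat.eq_dec i j); [subst; lia|]. pose proof (sincr_lt th H i j); lia. Qed.
Lemma sincr_comp a b : sincr a -> sincr b -> sincr (fun k => a (b k)).
Proof. intros Ha Hb k. apply sincr_lt; auto. Qed.

Lemma cv_sub (u : nat -> R) l r : Un_cv u l -> (forall k, (k <= r k)%nat) -> Un_cv (fun k => u (r k)) l.
Proof. intros H Hr eps He. destruct (H eps He) as [N HN]. exists N. intros n Hn. apply HN. specialize (Hr n). lia. Qed.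

Definition bw_pick (a : nat -> R) l (N k : nat) : nat :=
  epsilon (inhabits 0%nat) (fun p => (N <= p)%nat /\ Rabs (a p - l) < / (INR k + 1)).
Fixpoint bw_th (a : nat -> R) l (k : nat) : nat :=
  match k with O => bw_pick a l 0 0 | S k => bw_pick a l (S (bw_th a l k)) (S k) end.

Lemma bw_sub (a : nat -> R) M : (forall n, Rabs (a n) <= M) ->
  exists th l, sincr th /\ Un_cv (fun k => a (th k)) l.
Proof.
  intro HM. destruct (Bolzano_Weierstrass a (fun c => - M <= c <= M) (compact_P3 _ _)) as [l Hl].
  { intro n. apply Rabs_le_between', HM. }
  assert (Hp : forall N k, (N <= bw_pick a l N k)%nat /\ Rabs (a (bw_pick a l N k) - l) < / (INR k + 1)).
  { intros N k. unfold bw_pick. apply epsilon_spec.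
    assert (Hd : 0 < / (INR k + 1)) by (apply Rinv_0_lt_compat; pose proof (pos_INR k); lra).
    destruct (Hl (disc l (mkposreal _ Hd)) N) as [p [Hp1 Hp2]].
    - exists (mkposreal _ Hd). intros y Hy; exact Hy.
    - exists p. split; auto. }
  exists (bw_th a l), l. split.
  - intro k. simpl. destruct (Hp (S (bw_th a l k)) (S k)). lia.
  - intros eps He. destruct (archimed (/ eps)) as [H1 _].
    assert (Hz : (0 <= up (/eps))%Z).
    { apply le_IZR. pose proof (Rinv_0_lt_compat eps He). simpl. lra. }
    exists (Z.to_nat (up (/ eps))). intros n Hn. unfold Rdist.
    assert (Hb : Rabs (a (bw_th a l n) - l) < / (INR n + 1)).
    { destruct n; simpl; apply Hp. }
    eapply Rlt_le_trans; [exact Hb|].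
    apply le_INR in Hn. rewrite INR_IZR_INZ, Z2Nat.id in Hn by auto.
    apply Rlt_le. rewrite <- (Rinv_inv eps). pose proof (pos_INR n). pose proof (Rinv_0_lt_compat eps He).
    apply Rinv_lt_contravar; [apply Rmult_lt_0_compat; lra | lra].
Qed.

Definition dg_ext (a : nat -> nat -> R) (psi : nat -> nat) (m : nat) : nat -> nat :=
  epsilon (inhabits (fun k => k)) (fun th => sincr th /\ exists l, Un_cv (fun k => a m (psi (th k))) l).
Fixpoint dg_Psi (a : nat -> nat -> R) (m : nat) : nat -> nat :=
  match m with
  | O => fun k => k
  | S m => fun k => dg_Psi a m (dg_ext a (dg_Psi a m) m k)
  end.

Lemma diag (a : nat -> nat -> R) M : (forall m n, Rabs (a m n) <= M) ->
  exists phi, sincr phi /\ forall m, exists l, Un_cv (fun k => a m (phi k)) l.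
Proof.
  intro HM.
  assert (Hext : forall psi m, sincr (dg_ext a psi m) /\ exists l, Un_cv (fun k => a m (psi (dg_ext a psi m k))) l).
  { intros psi m. unfold dg_ext. apply epsilon_spec.
    destruct (bw_sub (fun n => a m (psi n)) M) as [th [l [H1 H2]]]; [intro; apply HM|].
    exists th; split; eauto. }
  assert (Hinc : forall m, sincr (dg_Psi a m)).
  { induction m; simpl. - intro k; lia. - apply sincr_comp; auto. apply Hext. }
  assert (Hfac : forall i j, (i <= j)%nat -> exists rho, sincr rho /\ forall k, dg_Psi a j k = dg_Psi a i (rho k)).
  { intros i j Hij. induction Hij.
    - exists (fun k => k). split; [intro; lia| reflexivity].
    - destruct IHHij as [rho [Hr1 Hr2]]. exists (fun k => rho (dg_ext a (dg_Psi a m) m k)). split.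
      + apply sincr_comp; auto. apply Hext.
      + intro k. simpl. apply Hr2. }
  exists (fun k => dg_Psi a (S k) k). split.
  - intro k. set (th := dg_ext a (dg_Psi a (S k)) (S k)).
    change (dg_Psi a (S k) k < dg_Psi a (S k) (th (S k)))%nat.
    assert (Hth : sincr th) by apply Hext.
    pose proof (sincr_ge th Hth (S k)).
    apply Nat.lt_le_trans with (dg_Psi a (S k) (S k)).
    + apply (Hinc (S k) k).
    + apply sincr_le; auto.
  - intro m. destruct (Hext (dg_Psi a m) m) as [_ [l Hl]]. exists l.
    assert (Hb : forall k, (m <= k)%nat -> exists r, (k <= r)%nat /\ dg_Psi a (S k) k = dg_Psi a (S m) r).
    { intros k Hk. destruct (Hfac (S m) (S k) ltac:(lia)) as [rho [Hr1 Hr2]].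
      exists (rho k). split; [apply sincr_ge; auto| apply Hr2]. }
    intros eps He. destruct (Hl eps He) as [N HN]. exists (max N m). intros k Hk.
    destruct (Hb k ltac:(lia)) as [r [Hr1 Hr2]]. rewrite Hr2. simpl. apply HN. lia.
Qed.

Lemma inv_n_small eta : eta > 0 -> exists N, forall n, (N <= n)%nat -> / (INR n + 1) < eta.
Proof.
  intro He. destruct (archimed (/ eta)) as [H1 _].
  assert (Hz : (0 <= up (/eta))%Z).
  { apply le_IZR. pose proof (Rinv_0_lt_compat eta He). simpl. lra. }
  exists (Z.to_nat (up (/ eta))). intros n Hn.
  apply le_INR in Hn. rewrite INR_IZR_INZ, Z2Nat.id in Hn by auto.
  rewrite <- (Rinv_inv eta). pose proof (pos_INR n). pose proof (Rinv_0_lt_compat eta He).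
  apply Rinv_lt_contravar; [apply Rmult_lt_0_compat; lra | lra].
Qed.

Lemma lim_ge_inv (u : nat -> R) l : Un_cv u l -> (forall n, - / (INR n + 1) <= u n) -> 0 <= l.
Proof.
  intros Hu Hn. apply Rnot_lt_le; intro Hl.
  destruct (inv_n_small (- l / 2)) as [N HN]; [lra|].
  assert (- (- l / 2) <= l).
  { apply (lim_ge_ev u); auto. exists N. intros n H. specialize (HN n H). specialize (Hn n). lra. }
  lra.
Qed.

Lemma quad_zero d q : 0 <= q -> (forall s, 0 <= 2 * s * d + s * s * q) -> d = 0.
Proof.
  intros Hq H. set (s := - d / (q + 1)). specialize (H s).
  assert (Hk : (q+1)^2 * (2*s*d + s*s*q) = -(d*d)*(q+2)) by (unfold s; field; lra).
  assert (0 <= (q+1)^2 * (2*s*d + s*s*q)) by (apply Rmult_le_pos; [apply pow2_ge_0|lra]).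
  rewrite Hk in H0. nra.
Qed.

Lemma riesz_sub {E : Hilbert} (C : E -> Prop) (L : E -> R) K :
  C hzero -> (forall a b, C a -> C b -> C (hadd a b)) -> (forall r a, C a -> C (hscal r a)) ->
  (forall u l, (forall n, C (u n)) -> norm_conv u l -> C l) ->
  (forall a b, C a -> C b -> L (hadd a b) = L a + L b) -> (forall r a, C a -> L (hscal r a) = r * L a) ->
  0 <= K -> (forall a, C a -> Rabs (L a) <= K * hnorm a) ->
  exists y, C y /\ forall c, C c -> inner y c = L c.
Proof.
  intros C0 Cadd Cscal Cclos Ladd Lscal HK Lb.
  set (J := fun a => inner a a - 2 * L a).
  assert (Jlb : forall a, C a -> - (K * K) <= J a).
  { intros a Ha. unfold J. specialize (Lb a Ha). apply Rabs_le_between' in Lb.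
    rewrite <- hnorm_sq. pose proof (hnorm_pos a). pose proof (Rle_0_sqr (hnorm a - K)). unfold Rsqr in *. nra. }
  destruct (real_glb (fun r => exists a, C a /\ r = J a)) as [g [Hg1 Hg2]].
  { exists (J hzero). eauto. }
  { exists (- (K*K)). intros r [a [Ha ->]]. auto. }
  assert (Hge : forall a, C a -> g <= J a) by (intros a Ha; apply Hg1; eauto).
  assert (Happ : forall eps, eps > 0 -> exists a, C a /\ J a < g + eps).
  { intros eps He. apply NNPP; intro Hn. assert (g + eps <= g); [|lra].
    apply Hg2. intros r [a [Ha ->]]. apply Rnot_lt_le. intro H. apply Hn; eauto. }
  set (an := fun n : nat => epsilon (inhabits hzero) (fun a => C a /\ J a < g + / (INR n + 1))).
  assert (Han : forall n, C (an n) /\ J (an n) < g + / (INR n + 1)).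
  { intro n. unfold an. apply epsilon_spec. apply Happ. apply Rinv_0_lt_compat. pose proof (pos_INR n); lra. }
  assert (Hpar : forall a b, C a -> C b -> inner (hsub a b) (hsub a b) = 2 * (J a + J b) - 4 * J (hscal (/2) (hadd a b))).
  { intros a b Ha Hb. unfold J. rewrite Lscal, Ladd by auto.
    rewrite !inner_sub_l, !inner_sub_r, !inner_scal_l, !inner_scal_r, !inner_add_l, !inner_add_r.
    rewrite (inner_sym b a). field. }
  assert (Csub : forall a b, C a -> C b -> C (hsub a b)) by (intros; unfold hsub; auto).
  destruct (complete an) as [y Hy].
  { intros eps He. destruct (inv_n_small (eps * eps / 4)) as [N HN]. { nra. }
    exists N. intros m n Hm Hn. apply hnorm_lt_sq; [lra|].
    destruct (Han m) as [Cm Jm]. destruct (Han n) as [Cn Jn].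
    rewrite Hpar by auto.
    pose proof (Hge _ (Cscal (/2) _ (Cadd _ _ Cm Cn))). specialize (HN m Hm) as H1. specialize (HN n Hn) as H2. lra. }
  assert (Cy : C y) by (apply (Cclos an y); [intro; apply Han| exact Hy]).
  exists y. split; auto. intros c Hc.
  apply Rminus_diag_uniq. apply (quad_zero _ (inner c c) (inner_pos c)). intro s.
  apply (lim_ge_inv (fun n => 2 * s * (inner (an n) c - L c) + s * s * inner c c)).
  - apply CV_plus; [|apply CV_const].
    apply CV_mult; [apply CV_const|]. apply CV_minus; [apply norm_conv_inner; auto| apply CV_const].
  - intro n. destruct (Han n) as [Cn Jn].
    assert (Hs := Hge _ (Cadd _ _ Cn (Cscal s c Hc))).
    unfold J in Hs, Jn. rewrite Ladd, Lscal in Hs by auto.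
    rewrite inner_add_l, !inner_add_r, !inner_scal_l, !inner_scal_r, (inner_sym c (an n)) in Hs. lra.
Qed.

Lemma weak_compact {E : Hilbert} (x : nat -> E) Rb : (forall n, hnorm (x n) <= Rb) ->
  exists phi xb, sincr phi /\ weak_conv (fun k => x (phi k)) xb.
Proof.
  intro HR. assert (HR0 : 0 <= Rb) by (eapply Rle_trans; [apply (hnorm_pos (x O))|apply (HR O)]).
  destruct (diag (fun m n => inner (x n) (x m)) (Rb * Rb)) as [phi [Hphi Hconv]].
  { intros m n. eapply Rle_trans; [apply CS|]. pose proof (HR n); pose proof (HR m).
    pose proof (hnorm_pos (x n)); pose proof (hnorm_pos (x m)). nra. }
  set (y := fun k => x (phi k)).
  assert (Hy : forall k, hnorm (y k) <= Rb) by (intro; apply HR).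
  set (C := fun c => exists l, Un_cv (fun k => inner (y k) c) l).
  set (L := fun c => epsilon (inhabits 0) (fun l => Un_cv (fun k => inner (y k) c) l)).
  assert (HL : forall c, C c -> Un_cv (fun k => inner (y k) c) (L c)).
  { intros c Hc. unfold L. apply epsilon_spec. exact Hc. }
  assert (Cx : forall m, C (x m)) by (intro m; apply Hconv).
  assert (C0 : C hzero).
  { exists 0. eapply Un_cv_ext; [|apply CV_const]. intro; simpl. now rewrite inner_zero_r. }
  assert (Cadd : forall a b, C a -> C b -> C (hadd a b)).
  { intros a b [la Ha] [lb Hb]. exists (la + lb). eapply Un_cv_ext; [|apply CV_plus; eauto].
    intro; simpl. now rewrite inner_add_r. }
  assert (Cscal : forall r a, C a -> C (hscal r a)).
  { intros r a [la Ha]. exists (r * la). eapply Un_cv_ext; [|apply CV_mult; [apply CV_const|eauto]].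
    intro; simpl. now rewrite inner_scal_r. }
  assert (Cclos : forall u l, (forall n, C (u n)) -> norm_conv u l -> C l).
  { intros u c Hu Huc. destruct (R_complete (fun k => inner (y k) c)) as [l Hl]; [|exists l; exact Hl].
    intros eps He.
    destruct (Huc (eps / (4 * (Rb + 1)))) as [I HI]. { apply Rdiv_lt_0_compat; lra. }
    specialize (HI I (Nat.le_refl _)).
    destruct (Hu I) as [li Hli]. destruct (CV_Cauchy _ (exist _ li Hli) (eps / 2)) as [N HN]; [lra|].
    exists N. intros n m Hn Hm. specialize (HN n m Hn Hm). unfold Rdist in *.
    replace (inner (y n) c - inner (y m) c) with
      (inner (y n) (hsub c (u I)) + (inner (y n) (u I) - inner (y m) (u I)) - inner (y m) (hsub c (u I)))
      by (rewrite !inner_sub_r; ring).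
    rewrite hnorm_sub_sym in HI.
    pose proof (CS (y n) (hsub c (u I))); pose proof (CS (y m) (hsub c (u I))).
    pose proof (Hy n); pose proof (Hy m). pose proof (hnorm_pos (hsub c (u I))).
    pose proof (hnorm_pos (y n)); pose proof (hnorm_pos (y m)).
    assert (Hb : Rb * hnorm (hsub c (u I)) <= Rb * (eps / (4 * (Rb + 1)))) by (apply Rmult_le_compat_l; lra).
    assert (Hb2 : Rb * (eps / (4 * (Rb + 1))) <= eps / 4).
    { unfold Rdiv. rewrite <- Rmult_assoc. apply Rmult_le_reg_r with (4 * (Rb+1)); [lra|].
      rewrite Rmult_assoc, Rinv_l, Rmult_1_r by lra. field_simplify; nra. }
    assert (hnorm (y n) * hnorm (hsub c (u I)) <= Rb * hnorm (hsub c (u I))) by (apply Rmult_le_compat_r; lra).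
    assert (hnorm (y m) * hnorm (hsub c (u I)) <= Rb * hnorm (hsub c (u I))) by (apply Rmult_le_compat_r; lra).
    pose proof (Rabs_triang (inner (y n) (hsub c (u I)) + (inner (y n) (u I) - inner (y m) (u I))) (- inner (y m) (hsub c (u I)))).
    pose proof (Rabs_triang (inner (y n) (hsub c (u I))) (inner (y n) (u I) - inner (y m) (u I))).
    rewrite Rabs_Ropp in H8. unfold Rminus at 1. lra. }
  assert (Ladd : forall a b, C a -> C b -> L (hadd a b) = L a + L b).
  { intros a b Ha Hb. apply (UL_sequence (fun k => inner (y k) (hadd a b))); [apply HL; auto|].
    eapply Un_cv_ext; [|apply CV_plus; apply HL; eauto]. intro; simpl. now rewrite inner_add_r. }
  assert (Lscal : forall r a, C a -> L (hscal r a) = r * L a).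
  { intros r a Ha. apply (UL_sequence (fun k => inner (y k) (hscal r a))); [apply HL; auto|].
    eapply Un_cv_ext; [|apply CV_mult; [apply CV_const| apply HL; eauto]]. intro; simpl. now rewrite inner_scal_r. }
  assert (Lb : forall a, C a -> Rabs (L a) <= Rb * hnorm a).
  { intros a Ha. apply Rabs_le. pose proof (hnorm_pos a). split.
    - apply (lim_ge_ev _ _ _ (HL a Ha)). exists O. intros n _. pose proof (inner_ge (y n) a).
      pose proof (Hy n). assert (hnorm (y n) * hnorm a <= Rb * hnorm a) by (apply Rmult_le_compat_r; lra). lra.
    - apply (lim_le_ev _ _ _ (HL a Ha)). exists O. intros n _. pose proof (inner_le (y n) a).
      pose proof (Hy n). assert (hnorm (y n) * hnorm a <= Rb * hnorm a) by (apply Rmult_le_compat_r; lra). lra. }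
  destruct (riesz_sub C L Rb C0 Cadd Cscal Cclos Ladd Lscal HR0 Lb) as [xb [Cxb Hxb]].
  exists phi, xb. split; auto. intro v.
  destruct (riesz_sub C (fun c => inner v c) (hnorm v) C0 Cadd Cscal Cclos) as [P [CP HP]].
  { intros; apply inner_add_r. } { intros; apply inner_scal_r. } { apply hnorm_pos. }
  { intros a _. apply CS. }
  assert (Hyk : forall k, inner (y k) v = inner (y k) P).
  { intro k. rewrite (inner_sym (y k) P), HP by apply Cx. apply inner_sym. }
  eapply Un_cv_ext. { intro k. symmetry. apply Hyk. }
  replace (inner xb v) with (L P). { apply HL, CP. }
  rewrite <- Hxb by auto. rewrite inner_sym, HP by auto. apply inner_sym.
Qed.

Definition ERplus (a : ER) (r : R) : ER := match a with Fin x => Fin (x + r) | _ => a end.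

Definition contR {E : Hilbert} (q : E -> R) : Prop :=
  forall y eps, eps > 0 -> exists delta, delta > 0 /\ forall y', hnorm (hsub y' y) < delta -> Rabs (q y' - q y) < eps.

Lemma contR_const {E : Hilbert} c : contR (fun _ : E => c).
Proof. intros y eps He. exists 1. split; [lra|]. intros. rewrite Rminus_diag, Rabs_R0. lra. Qed.

Lemma contR_plus {E : Hilbert} (q1 q2 : E -> R) : contR q1 -> contR q2 -> contR (fun y => q1 y + q2 y).
Proof.
  intros H1 H2 y eps He. destruct (H1 y (eps/2)) as [d1 [Hd1 H1']]; [lra|].
  destruct (H2 y (eps/2)) as [d2 [Hd2 H2']]; [lra|].
  exists (Rmin d1 d2). split; [apply Rmin_pos; lra|]. intros y' Hy'.
  pose proof (Rmin_l d1 d2); pose proof (Rmin_r d1 d2).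
  specialize (H1' y' ltac:(lra)); specialize (H2' y' ltac:(lra)).
  replace (q1 y' + q2 y' - (q1 y + q2 y)) with ((q1 y' - q1 y) + (q2 y' - q2 y)) by ring.
  eapply Rle_lt_trans; [apply Rabs_triang|]. lra.
Qed.

Lemma contR_scal {E : Hilbert} (q : E -> R) a : contR q -> contR (fun y => a * q y).
Proof.
  intros H y eps He. destruct (H y (eps / (Rabs a + 1))) as [d [Hd H']].
  { apply Rdiv_lt_0_compat; pose proof (Rabs_pos a); lra. }
  exists d. split; auto. intros y' Hy'. specialize (H' y' Hy').
  replace (a * q y' - a * q y) with (a * (q y' - q y)) by ring. rewrite Rabs_mult.
  pose proof (Rabs_pos a). pose proof (Rabs_pos (q y' - q y)).
  apply Rle_lt_trans with ((Rabs a + 1) * Rabs (q y' - q y)); [nra|].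
  apply Rmult_lt_compat_l with (r := Rabs a + 1) in H'; [|lra].
  replace ((Rabs a + 1) * (eps / (Rabs a + 1))) with eps in H' by (field; lra). lra.
Qed.

Lemma contR_nsq {E : Hilbert} (a : E) : contR (fun y => inner (hsub y a) (hsub y a)).
Proof.
  intros y eps He. set (r := hnorm (hsub y a)).
  exists (Rmin 1 (eps / (2 * r + 2))). split.
  { apply Rmin_pos; [lra|]. apply Rdiv_lt_0_compat; [lra|]. pose proof (hnorm_pos (hsub y a)). unfold r; lra. }
  intros y' Hy'. pose proof (Rmin_l 1 (eps / (2 * r + 2))); pose proof (Rmin_r 1 (eps / (2 * r + 2))).
  replace (inner (hsub y' a) (hsub y' a) - inner (hsub y a) (hsub y a)) with
     (inner (hsub y' y) (hadd (hsub y' a) (hsub y a))).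
  2:{ rewrite !inner_sub_l, !inner_add_r, !inner_sub_r. rewrite (inner_sym y' y), (inner_sym a y'), (inner_sym a y). ring. }
  eapply Rle_lt_trans; [apply CS|].
  pose proof (hnorm_add (hsub y' a) (hsub y a)).
  pose proof (hnorm_tri y' y a). fold r in H2, H1.
  pose proof (hnorm_pos (hsub y' y)). pose proof (hnorm_pos (hsub y a)). fold r in H4.
  apply Rle_lt_trans with (hnorm (hsub y' y) * (2 * r + 2)).
  { apply Rmult_le_compat_l; lra. }
  apply Rlt_le_trans with ((eps / (2 * r + 2)) * (2 * r + 2)).
  { apply Rmult_lt_compat_r; lra. }
  right. field. lra.
Qed.

Lemma lsc_closed {E : Hilbert} (G : E -> ER) (q : E -> R) (u : nat -> E) v c N :
  lsc G -> contR q -> norm_conv u v ->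
  (forall n, (N <= n)%nat -> ERle (ERplus (G (u n)) (q (u n))) (Fin c)) ->
  ERle (ERplus (G v) (q v)) (Fin c).
Proof.
  intros HG Hq Hu Hn. apply NNPP; intro Hc.
  assert (Hm : exists eta, eta > 0 /\ ERlt (Fin (c - q v + eta)) (G v)).
  { destruct (G v) as [g| |] eqn:Hg; simpl in Hc.
    - exists ((g + q v - c)/2). split; [lra|]. split; simpl; [lra|]. intro Heq; injection Heq; lra.
    - exists 1. split; [lra|]. split; simpl; auto. discriminate.
    - tauto. }
  destruct Hm as [eta [He Hlt]].
  destruct (HG v _ Hlt) as [d [Hd Hd']].
  destruct (Hq v eta He) as [d2 [Hd2 Hd2']].
  destruct (Hu (Rmin d d2)) as [M HM]. { apply Rmin_pos; lra. }
  specialize (HM (max N M) (Nat.le_max_r _ _)). specialize (Hn (max N M) (Nat.le_max_l _ _)).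
  pose proof (Rmin_l d d2); pose proof (Rmin_r d d2).
  specialize (Hd' (u (max N M)) ltac:(lra)). specialize (Hd2' (u (max N M)) ltac:(lra)).
  apply Rabs_def2 in Hd2'.
  destruct Hd' as [Hd' _]. destruct (G (u (max N M))) as [g| |]; simpl in *; auto; lra.
Qed.

Lemma pow_cv0 a : 0 <= a < 1 -> Un_cv (fun k => a ^ k) 0.
Proof.
  intros Ha eps He. destruct (pow_lt_1_zero a ltac:(rewrite Rabs_pos_eq; lra) eps He) as [N HN].
  exists N. intros n Hn. unfold Rdist. rewrite Rminus_0_r. apply HN; lia.
Qed.

Definition vpF {E : Hilbert} (G : E -> ER) (Q : E -> R) (y : E) : ER := ERplus (G y) (Q y).
Definition vp_choose {E : Hilbert} (G : E -> ER) (Q : E -> R) (x : E) (e : R) : E :=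
  epsilon (inhabits x) (fun x' => ERle (vpF G Q x') (vpF G Q x) /\ forall y, ERle (vpF G Q x') (ERplus (vpF G Q y) e)).
Fixpoint vp_st {E : Hilbert} (G : E -> ER) (mu ee : nat -> R) (x0 : E) (k : nat) : (E -> R) * E :=
  match k with
  | O => (fun _ => 0, x0)
  | S k => let (Q, x) := vp_st G mu ee x0 k in
           let Q' := fun y => Q y + mu k * inner (hsub y x) (hsub y x) in
           (Q', vp_choose G Q' x (ee (S k)))
  end.

Lemma vp_choose_spec {E : Hilbert} (G : E -> ER) (Q : E -> R) x e m0 c :
  (forall y, ERle (Fin m0) (G y)) -> (forall y, 0 <= Q y) -> vpF G Q x = Fin c -> e > 0 ->
  let x' := vp_choose G Q x e in
  ERle (vpF G Q x') (vpF G Q x) /\ forall y, ERle (vpF G Q x') (ERplus (vpF G Q y) e).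
Proof.
  intros Hm HQ Hx He. unfold vp_choose. apply epsilon_spec.
  destruct (real_glb (fun r => exists y, vpF G Q y = Fin r)) as [g [Hg1 Hg2]].
  { eauto. }
  { exists m0. intros r [y Hy]. unfold vpF in Hy. specialize (Hm y). specialize (HQ y).
    destruct (G y); simpl in *; try discriminate. injection Hy; lra. }
  assert (Hex : exists y r, vpF G Q y = Fin r /\ r < g + e).
  { apply NNPP; intro Hn. assert (g + e <= g); [|lra]. apply Hg2. intros r [y Hy].
    apply Rnot_lt_le; intro; apply Hn; eauto. }
  destruct Hex as [y [r [Hy Hr]]].
  assert (Hall : forall r0, r0 < g + e -> forall y', ERle (Fin r0) (ERplus (vpF G Q y') e)).
  { intros r0 Hr0 y'. destruct (vpF G Q y') as [s| |] eqn:Hs; simpl; auto.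
    - specialize (Hg1 s ltac:(eauto)). lra.
    - exfalso. unfold vpF in Hs. specialize (Hm y'). destruct (G y'); simpl in Hs, Hm; try discriminate; auto. }
  destruct (Rle_dec r c).
  - exists y. rewrite Hy, Hx. split; [simpl; lra|]. intro y'. rewrite <- Hy. rewrite Hy. apply Hall; auto.
  - exists x. rewrite Hx. split; [simpl; lra|]. intro y'. apply Hall. lra.
Qed.

Fixpoint psum {E : Hilbert} (a : nat -> E) (k : nat) : E :=
  match k with O => hzero | S k => hadd (psum a k) (a k) end.

Lemma contR_ext {E : Hilbert} (q1 q2 : E -> R) : (forall y, q1 y = q2 y) -> contR q1 -> contR q2.
Proof. intros H Hc y eps He. destruct (Hc y eps He) as [d [Hd Hd']]. exists d. split; auto. intros. rewrite <- !H. auto. Qed.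

Lemma geom_cauchy {E : Hilbert} (s : nat -> E) beta : 0 <= beta ->
  (forall k, hnorm (hsub (s (S k)) (s k)) <= beta * (/4) ^ k) ->
  forall k m, (k <= m)%nat -> hnorm (hsub (s m) (s k)) <= 4/3 * beta * ((/4)^k - (/4)^m).
Proof.
  intros Hb Hs k m Hkm. induction Hkm.
  - rewrite hnorm_sub_self. lra.
  - eapply Rle_trans; [apply (hnorm_tri _ (s m))|]. specialize (Hs m). simpl. lra.
Qed.

Lemma geom_complete {E : Hilbert} (s : nat -> E) beta : 0 <= beta ->
  (forall k, hnorm (hsub (s (S k)) (s k)) <= beta * (/4) ^ k) ->
  exists l, norm_conv s l /\ forall k, hnorm (hsub l (s k)) <= 4/3 * beta * (/4)^k.
Proof.
  intros Hb Hs. pose proof (geom_cauchy s beta Hb Hs) as Hc.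
  assert (H4 : forall n, 0 < (/4)^n) by (intro; apply pow_lt; lra).
  destruct (complete s) as [l Hl].
  { intros eps He. destruct (pow_lt_1_zero (/4) ltac:(rewrite Rabs_pos_eq; lra) (3/4*eps/(beta+1))) as [N HN].
    { apply Rdiv_lt_0_compat; lra. }
    exists N. intros m n Hm Hn.
    assert (Hk : forall k j, (N <= k)%nat -> (k <= j)%nat -> hnorm (hsub (s j) (s k)) < eps).
    { intros k j Hk Hkj. eapply Rle_lt_trans; [apply Hc; auto|].
      specialize (HN k Hk). rewrite Rabs_pos_eq in HN by (apply Rlt_le; auto). pose proof (H4 j).
      apply Rle_lt_trans with (4/3 * beta * (/4)^k); [nra|].
      apply Rmult_lt_compat_l with (r := 4/3*(beta+1)) in HN; [|lra].
      replace (4 / 3 * (beta + 1) * (3 / 4 * eps / (beta + 1))) with eps in HN by (field; lra). nra. }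
    destruct (Nat.le_ge_cases m n) as [H|H].
    - rewrite hnorm_sub_sym. apply Hk; auto.
    - apply Hk; auto. }
  exists l. split; auto. intro k.
  apply (lim_le_ev (fun m => hnorm (hsub (s m) (s k)))). { apply norm_conv_hnorm; auto. }
  exists k. intros m Hm. eapply Rle_trans; [apply Hc; auto|]. pose proof (H4 m). nra.
Qed.

Lemma VP {E : Hilbert} (G : E -> ER) (m0 g0 kappa : R) (x0 : E) :
  (forall x, G x <> MInf) -> lsc G -> (forall x, ERle (Fin m0) (G x)) -> G x0 = Fin g0 -> kappa > 0 ->
  exists v gv xi S, G v = Fin gv /\ gv <= g0 /\ hnorm xi <= kappa /\ S > 0 /\
    forall y, ERle (Fin (gv + inner xi (hsub y v) - S / 2 * (hnorm (hsub y v)) ^ 2)) (G y).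
Proof.
  intros HnM HG Hm0 Hx0 Hk.
  assert (Hg0 : m0 <= g0) by (specialize (Hm0 x0); rewrite Hx0 in Hm0; exact Hm0).
  set (e0 := g0 - m0 + 1). assert (He0 : e0 > 0) by (unfold e0; lra).
  set (mu0 := kappa * kappa / (16 * e0)). assert (Hmu0 : mu0 > 0) by (unfold mu0; apply Rdiv_lt_0_compat; nra).
  set (mu := fun k => mu0 * (/2)^k). set (ee := fun k => e0 * (/8)^k).
  assert (H2 : forall k, 0 < (/2)^k) by (intro; apply pow_lt; lra).
  assert (H4 : forall k, 0 < (/4)^k) by (intro; apply pow_lt; lra).
  assert (H8 : forall k, 0 < (/8)^k) by (intro; apply pow_lt; lra).
  assert (Hmu : forall k, mu k > 0) by (intro; unfold mu; specialize (H2 k); nra).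
  assert (Hee : forall k, ee k > 0) by (intro; unfold ee; specialize (H8 k); nra).
  set (Q := fun k => fst (vp_st G mu ee x0 k)). set (X := fun k => snd (vp_st G mu ee x0 k)).
  assert (HQS : forall k y, Q (S k) y = Q k y + mu k * inner (hsub y (X k)) (hsub y (X k))).
  { intros k y. unfold Q, X. simpl. destruct (vp_st G mu ee x0 k). reflexivity. }
  assert (HXS : forall k, X (S k) = vp_choose G (Q (S k)) (X k) (ee (S k))).
  { intros k. unfold Q, X. simpl. destruct (vp_st G mu ee x0 k). reflexivity. }
  assert (HQ0 : forall y, Q O y = 0) by reflexivity.
  assert (HX0 : X O = x0) by reflexivity.
  assert (Qnn : forall k y, 0 <= Q k y).
  { induction k; intro y; [rewrite HQ0; lra|]. rewrite HQS. specialize (Hmu k). pose proof (inner_pos (hsub y (X k))).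
    specialize (IHk y). nra. }
  assert (Qcont : forall k, contR (Q k)).
  { induction k.
    - apply (contR_ext (fun _ => 0)); [intro; rewrite HQ0; auto|apply contR_const].
    - apply (contR_ext (fun y => Q k y + mu k * inner (hsub y (X k)) (hsub y (X k)))); [intro; rewrite HQS; auto|].
      apply contR_plus; auto. apply contR_scal, contR_nsq. }
  assert (nsq0 : forall x : E, inner (hsub x x) (hsub x x) = 0).
  { intro x. rewrite <- hnorm_sq, hnorm_sub_self. ring. }
  assert (Inv : forall k, (exists c, vpF G (Q k) (X k) = Fin c) /\
                  forall y, ERle (vpF G (Q k) (X k)) (ERplus (vpF G (Q k) y) (ee k))).
  { induction k.
    - unfold vpF. rewrite HX0, Hx0, HQ0. split; [eexists; reflexivity|]. intro y. specialize (Hm0 y). rewrite HQ0.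
      unfold ee. simpl pow. destruct (G y); simpl in *; auto. unfold e0. lra.
    - destruct IHk as [[c Hc] _].
      assert (Hc' : vpF G (Q (S k)) (X k) = Fin c).
      { unfold vpF in *. rewrite HQS, nsq0, Rmult_0_r, Rplus_0_r. exact Hc. }
      destruct (vp_choose_spec G (Q (S k)) (X k) (ee (S k)) m0 c Hm0 (Qnn (S k)) Hc' (Hee (S k))) as [Hs1 Hs2].
      rewrite <- HXS in Hs1, Hs2. split; auto.
      rewrite Hc' in Hs1. unfold vpF in *. specialize (HnM (X (S k))). destruct (G (X (S k))); simpl in *; eauto; try tauto. }
  set (c := fun k => match vpF G (Q k) (X k) with Fin c => c | _ => 0 end).
  assert (Hc : forall k, vpF G (Q k) (X k) = Fin (c k)).
  { intro k. destruct (Inv k) as [[ck Hck] _]. unfold c. rewrite Hck. reflexivity. }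
  assert (Hc0 : c O = g0).
  { pose proof (Hc O) as H. unfold vpF in H. rewrite HX0, Hx0, HQ0 in H. injection H; lra. }
  assert (cdec : forall k, c (S k) <= c k).
  { intro k. pose proof (vp_choose_spec G (Q (S k)) (X k) (ee (S k)) m0 (c k) Hm0 (Qnn (S k))) as Hs.
    assert (Hc' : vpF G (Q (S k)) (X k) = Fin (c k)).
    { unfold vpF in *. rewrite HQS, nsq0, Rmult_0_r, Rplus_0_r. apply Hc. }
    destruct (Hs Hc' (Hee (S k))) as [Hs1 _]. rewrite <- HXS, Hc, Hc' in Hs1. exact Hs1. }
  set (Sk := fun k y => ERle (vpF G (Q k) y) (Fin (c k))).
  assert (P4 : forall k y, Sk (S k) y -> mu k * inner (hsub y (X k)) (hsub y (X k)) <= ee k).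
  { intros k y Hy. destruct (Inv k) as [_ Hi]. specialize (Hi y). rewrite Hc in Hi.
    unfold Sk, vpF in *. rewrite HQS in Hy. specialize (cdec k). specialize (HnM y).
    destruct (G y); simpl in *; try tauto. lra. }
  assert (P5 : forall k j, (k <= j)%nat -> forall y, Sk j y -> Sk k y).
  { intros k j Hkj. induction Hkj; auto. intros y Hy. apply IHHkj. unfold Sk, vpF in *.
    rewrite HQS in Hy. specialize (cdec m). specialize (Hmu m). pose proof (inner_pos (hsub y (X m))).
    specialize (HnM y). destruct (G y); simpl in *; try tauto. nra. }
  assert (P6 : forall k, Sk k (X k)) by (intro k; unfold Sk; rewrite Hc; simpl; lra).
  set (rho := 4 * e0 / kappa).
  assert (Hrho : forall k, ee k / mu k = (rho * (/2)^k) * (rho * (/2)^k)).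
  { intro k. unfold ee, mu, rho, mu0.
    replace ((/8)^k) with ((/2)^k * (/4)^k) by (rewrite <- Rpow_mult_distr; f_equal; lra).
    replace ((/4)^k) with ((/2)^k * (/2)^k) by (rewrite <- Rpow_mult_distr; f_equal; lra).
    specialize (H2 k). field. split; lra. }
  assert (Hrho0 : rho > 0) by (unfold rho; apply Rdiv_lt_0_compat; lra).
  assert (Hdist : forall k y, Sk (S k) y -> hnorm (hsub y (X k)) <= rho * (/2)^k).
  { intros k y Hy. specialize (P4 k y Hy). apply hnorm_le_sq. { specialize (H2 k); nra. }
    rewrite <- Hrho. specialize (Hmu k). apply (Rmult_le_reg_l (mu k)); auto.
    replace (mu k * (ee k / mu k)) with (ee k) by (field; lra). lra. }
  assert (Hhalf : forall eps, eps > 0 -> exists N, forall n, (N <= n)%nat -> rho * (/2)^n < eps).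
  { intros eps He. destruct (pow_lt_1_zero (/2) ltac:(rewrite Rabs_pos_eq; lra) (eps / rho)) as [N HN].
    { apply Rdiv_lt_0_compat; lra. }
    exists N. intros n Hn. specialize (HN n Hn). rewrite Rabs_pos_eq in HN by (apply Rlt_le; auto).
    apply Rmult_lt_compat_l with (r := rho) in HN; auto. replace (rho * (eps / rho)) with eps in HN by (field; lra). lra. }
  destruct (complete X) as [v Hv].
  { intros eps He. destruct (Hhalf eps He) as [N HN]. exists N.
    assert (Hk' : forall k j, (N <= k)%nat -> (k <= j)%nat -> hnorm (hsub (X j) (X k)) < eps).
    { intros k j Hk0 Hkj. destruct (Nat.eq_dec k j). { subst j. rewrite hnorm_sub_self. lra. }
      eapply Rle_lt_trans; [apply Hdist|apply HN; auto]. apply (P5 (S k) j); [lia|apply P6]. }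
    intros m n Hm Hn. destruct (Nat.le_ge_cases m n) as [H|H].
    - rewrite hnorm_sub_sym. apply Hk'; auto.
    - apply Hk'; auto. }
  assert (Sv : forall k, Sk k v).
  { intro k. apply (lsc_closed G (Q k) X v (c k) k HG (Qcont k) Hv).
    intros n Hn. apply (P5 k n Hn), P6. }
  assert (Hvd : forall k, hnorm (hsub v (X k)) <= rho * (/2)^k) by (intro; apply Hdist, Sv).
  destruct (G v) as [gv| |] eqn:HGv.
  2:{ exfalso. specialize (Sv O). unfold Sk, vpF in Sv. rewrite HGv in Sv. exact Sv. }
  2:{ exfalso. apply (HnM v HGv). }
  assert (Hgv : gv <= g0).
  { specialize (Sv O). unfold Sk, vpF in Sv. rewrite HGv, HQ0, Hc0 in Sv. simpl in Sv. lra. }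
  set (W := psum (fun j => hscal (mu j) (hsub v (X j)))).
  set (beta := mu0 * rho).
  assert (Hbeta : beta = kappa / 4) by (unfold beta, mu0, rho; field; split; lra).
  destruct (geom_complete W beta) as [w [Hw Hwb]].
  { rewrite Hbeta; lra. }
  { intro k. change (W (S k)) with (hadd (W k) (hscal (mu k) (hsub v (X k)))). replace (hsub (hadd (W k) (hscal (mu k) (hsub v (X k)))) (W k)) with (hscal (mu k) (hsub v (X k))) by hring.
    rewrite hnorm_scal, Rabs_pos_eq by (apply Rlt_le, Hmu).
    replace (beta * (/4)^k) with (mu k * (rho * (/2)^k)).
    - apply Rmult_le_compat_l; [apply Rlt_le, Hmu|apply Hvd].
    - unfold mu, beta. replace ((/4)^k) with ((/2)^k * (/2)^k) by (rewrite <- Rpow_mult_distr; f_equal; lra). ring. }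
  assert (Hwn : hnorm w <= kappa / 3).
  { specialize (Hwb O). change (W O) with (@hzero E) in Hwb. rewrite hnorm_sub0 in Hwb. rewrite Hbeta in Hwb. simpl in Hwb. lra. }
  set (M := fun k => 2 * mu0 * (1 - (/2)^k)).
  assert (HQd : forall k y, Q k y - Q k v = M k * inner (hsub y v) (hsub y v) + 2 * inner (hsub y v) (W k)).
  { intros k y. induction k.
    - rewrite !HQ0. unfold M. simpl. unfold W; simpl. rewrite inner_zero_r. ring.
    - rewrite !HQS. unfold W. simpl. fold W. rewrite inner_add_r, inner_scal_r.
      replace (M (S k)) with (M k + mu k) by (unfold M, mu; simpl; field).
      replace (Q k y + mu k * inner (hsub y (X k)) (hsub y (X k)) - (Q k v + mu k * inner (hsub v (X k)) (hsub v (X k))))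
        with ((Q k y - Q k v) + mu k * (inner (hsub y (X k)) (hsub y (X k)) - inner (hsub v (X k)) (hsub v (X k)))) by ring.
      rewrite IHk. rewrite !inner_sub_l, !inner_sub_r. rewrite (inner_sym (X k) y), (inner_sym (X k) v), (inner_sym v y). ring. }
  exists v, gv, (hscal (-2) w), (4 * mu0). repeat split; auto.
  { rewrite hnorm_scal. replace (Rabs (-2)) with 2 by (rewrite Rabs_left; lra). lra. }
  { lra. }
  intro y. destruct (G y) as [gy| |] eqn:HGy; simpl; auto.
  2:{ apply (HnM y HGy). }
  rewrite inner_scal_l, Rmult_1_r, hnorm_sq.
  apply Rnot_lt_le. intro Hlt.
  set (Tl := gy - gv + 2 * mu0 * inner (hsub y v) (hsub y v) + 2 * inner (hsub y v) w).
  assert (HTl : Tl < 0).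
  { unfold Tl. rewrite (inner_sym (hsub y v) w). lra. }
  assert (HT : Un_cv (fun k => gy + Q k y - (gv + Q k v)) Tl).
  { apply (Un_cv_ext (fun k => gy - gv + (M k * inner (hsub y v) (hsub y v) + 2 * inner (hsub y v) (W k)))).
    { intro k. rewrite <- HQd. ring. }
    replace Tl with (gy - gv + (2*mu0*(1-0) * inner (hsub y v) (hsub y v) + 2 * inner (hsub y v) w)) by (unfold Tl; ring).
    apply CV_plus; [apply CV_const|].
    apply CV_plus.
    - apply CV_mult; [|apply CV_const]. unfold M.
      apply CV_mult; [apply CV_const|]. apply CV_minus; [apply CV_const|apply pow_cv0; lra].
    - apply CV_mult; [apply CV_const|]. eapply Un_cv_ext; [intro; apply inner_sym|]. rewrite inner_sym.
      apply norm_conv_inner; auto. }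
  destruct (cv_ev _ _ (Tl - 1) (Tl / 2) HT ltac:(lra)) as [K HK].
  assert (Sy : forall k, (K <= k)%nat -> Sk k y).
  { intros k Hk'. specialize (HK k Hk'). specialize (Sv k). unfold Sk, vpF in *. rewrite HGy. rewrite HGv in Sv.
    simpl in *. lra. }
  assert (Hxy : norm_conv X y).
  { intros eps He. destruct (Hhalf eps He) as [N HN]. exists (max N K). intros n Hn.
    rewrite hnorm_sub_sym. eapply Rle_lt_trans; [apply Hdist, Sy; lia| apply HN; lia]. }
  pose proof (norm_conv_unique X v y Hv Hxy). subst y.
  rewrite HGv in HGy. injection HGy as <-. unfold Tl in HTl. rewrite nsq0, inner_sub_l in HTl.
  rewrite Rminus_diag in HTl. lra.
Qed.

Definition Iset {E : Hilbert} (f : E -> ER) (xb p u : E) (delta : R) : ER -> Prop :=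
  fun w => exists (t : R) (h' : E), 0 < t < delta /\ hnorm (hsub h' u) < delta /\ w = Delta2 f xb p t h'.

Lemma f2lower_eq {E : Hilbert} (f : E -> ER) xb p u :
  f2lower f xb p u = ERsup (fun v => exists delta, delta > 0 /\ v = ERinf (Iset f xb p u delta)).
Proof. reflexivity. Qed.

Lemma Delta2_cases {E : Hilbert} (f : E -> ER) xb p t u :
  Delta2 f xb p t u = PInf \/ exists a b, f (hadd xb (hscal t u)) = Fin a /\ f xb = Fin b /\
     Delta2 f xb p t u = Fin ((a - b - t * inner p u) / (t ^ 2 / 2)).
Proof.
  unfold Delta2. destruct (f (hadd xb (hscal t u))) as [a| |]; destruct (f xb) as [b| |]; auto.
  right. eauto.
Qed.

Lemma F1 {E : Hilbert} (f : E -> ER) xb p u c delta eps :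
  ERle (f2lower f xb p u) (Fin c) -> delta > 0 -> eps > 0 ->
  exists t h' d, 0 < t < delta /\ hnorm (hsub h' u) < delta /\ Delta2 f xb p t h' = Fin d /\ d <= c + eps.
Proof.
  intros H Hd He.
  assert (HI : ERle (ERinf (Iset f xb p u delta)) (Fin c)).
  { eapply ERle_trans; [|exact H]. rewrite f2lower_eq. apply le_ERsup. eauto. }
  destruct (ERinf_approx _ _ _ HI He) as [y [[t [h' [Ht [Hh ->]]]] Hy]].
  exists t, h'. destruct (Delta2_cases f xb p t h') as [Hp|[a [b [_ [_ Hf]]]]].
  - rewrite Hp in Hy. simpl in Hy. contradiction.
  - rewrite Hf in Hy |- *. simpl in Hy. eexists; repeat split; eauto; lra.
Qed.

Lemma tn_pos n : 0 < / (INR n + 1).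
Proof. apply Rinv_0_lt_compat. pose proof (pos_INR n); lra. Qed.
Lemma tn_cv : Un_cv (fun n => / (INR n + 1)) 0.
Proof.
  intros eps He. destruct (inv_n_small eps He) as [N HN]. exists N. intros n Hn. unfold Rdist.
  rewrite Rminus_0_r, Rabs_pos_eq by (apply Rlt_le, tn_pos). apply HN; lia.
Qed.

Definition MoscoHyp {E : Hilbert} (f : E -> ER) xb p (psi : E -> ER) :=
  forall tn : nat -> R, (forall n, 0 < tn n) -> Un_cv tn 0 ->
      Mosco_conv (fun n => epi (Delta2 f xb p (tn n))) (epi psi).

Lemma phi_le_psi {E : Hilbert} (f : E -> ER) xb p psi u c :
  MoscoHyp f xb p psi -> ERle (psi u) (Fin c) -> ERle (f2lower f xb p u) (Fin c).
Proof.
  intros HM Hpsi.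
  destruct (HM _ tn_pos tn_cv (u, c)) as [[H1 _] _].
  destruct (H1 Hpsi) as [zs [Hzs [Hf Hs]]].
  rewrite f2lower_eq. apply ERsup_le. intros y [delta [Hd ->]].
  apply ERle_eps. intros eps He.
  destruct (Hf delta Hd) as [N1 HN1]. destruct (inv_n_small delta Hd) as [N2 HN2].
  destruct (Hs eps He) as [N3 HN3].
  set (n := max N1 (max N2 N3)).
  specialize (HN1 n ltac:(unfold n; lia)). specialize (HN2 n ltac:(unfold n; lia)). specialize (HN3 n ltac:(unfold n; lia)).
  unfold Rdist in HN3. apply Rabs_def2 in HN3. simpl in HN3.
  eapply ERle_trans; [apply ERinf_le; exists (/ (INR n + 1)), (fst (zs n)); repeat split; eauto; apply tn_pos|].
  eapply ERle_trans; [apply (Hzs n)|]. simpl. lra.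
Qed.

Definition sel_fun {E : Hilbert} (f : E -> ER) xb p u c (n : nat) : R * E :=
  epsilon (inhabits (1, u)) (fun th => 0 < fst th < / (INR n + 1) /\ hnorm (hsub (snd th) u) < / (INR n + 1) /\
                                     ERle (Delta2 f xb p (fst th) (snd th)) (Fin (c + / (INR n + 1)))).

Lemma psi_le_phi {E : Hilbert} (f : E -> ER) xb p psi u c :
  MoscoHyp f xb p psi -> ERle (f2lower f xb p u) (Fin c) -> ERle (psi u) (Fin c).
Proof.
  intros HM Hphi.
  assert (Hsel : forall n, let th := sel_fun f xb p u c n in
     0 < fst th < / (INR n + 1) /\ hnorm (hsub (snd th) u) < / (INR n + 1) /\
     ERle (Delta2 f xb p (fst th) (snd th)) (Fin (c + / (INR n + 1)))).
  { intro n. unfold sel_fun. apply epsilon_spec.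
    destruct (F1 f xb p u c (/ (INR n + 1)) (/ (INR n + 1)) Hphi (tn_pos n) (tn_pos n)) as [t [h' [d [Ht [Hh [Hd Hdc]]]]]].
    exists (t, h'). simpl. split; [exact Ht|split; [exact Hh|]]. rewrite Hd. simpl. lra. }
  set (tn := fun n => fst (sel_fun f xb p u c n)).
  assert (Htp : forall n, 0 < tn n) by (intro n; apply (Hsel n)).
  assert (Htc : Un_cv tn 0).
  { intros eps He. destruct (tn_cv eps He) as [N HN]. exists N. intros n Hn. specialize (HN n Hn).
    unfold Rdist in *. rewrite Rminus_0_r in *. destruct (Hsel n) as [[H1 H2] _].
    change (fst (sel_fun f xb p u c n)) with (tn n) in H1, H2. rewrite Rabs_pos_eq by lra. rewrite Rabs_pos_eq in HN by (apply Rlt_le, tn_pos). lra. }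
  destruct (HM tn Htp Htc (u, c)) as [_ [_ H2]].
  apply H2. exists (fun k => k), (fun n => (snd (sel_fun f xb p u c n), c + / (INR n + 1))).
  split; [intro; lia|]. split; [intro k; unfold epi; simpl; apply (Hsel k)|]. split.
  - simpl. apply norm_conv_weak. intros eps He. destruct (inv_n_small eps He) as [N HN]. exists N.
    intros n Hn. eapply Rlt_trans; [apply (Hsel n)|]. apply HN; auto.
  - simpl. apply (Un_cv_ext (fun n => c + / (INR n + 1))); [reflexivity|]. pattern c at 2. rewrite <- (Rplus_0_r c). apply CV_plus; [apply CV_const|apply tn_cv].
Qed.

Lemma homog {E : Hilbert} (f : E -> ER) xb p u a lam :
  ERle (f2lower f xb p u) (Fin a) -> lam > 0 -> ERle (f2lower f xb p (hscal lam u)) (Fin (lam * lam * a)).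
Proof.
  intros Ha Hl. rewrite f2lower_eq. apply ERsup_le. intros y [delta [Hd ->]].
  apply ERle_eps. intros eps He.
  set (d' := Rmin (lam * delta) (delta / lam)).
  assert (Hd' : d' > 0) by (apply Rmin_pos; [nra|apply Rdiv_lt_0_compat; lra]).
  destruct (F1 f xb p u a d' (eps / (lam * lam)) Ha Hd') as [s [h'' [d [Hs [Hh [HD Hdle]]]]]].
  { apply Rdiv_lt_0_compat; nra. }
  pose proof (Rmin_l (lam * delta) (delta / lam)); pose proof (Rmin_r (lam * delta) (delta / lam)). fold d' in H, H0.
  eapply ERle_trans; [apply ERinf_le; exists (s / lam), (hscal lam h''); split; [|split]; [| |reflexivity]|].
  - split. { apply Rdiv_lt_0_compat; lra. }
    apply (Rmult_lt_reg_l lam); [lra|]. replace (lam * (s / lam)) with s by (field; lra). lra.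
  - replace (hsub (hscal lam h'') (hscal lam u)) with (hscal lam (hsub h'' u)) by hring.
    rewrite hnorm_scal, Rabs_pos_eq by lra.
    apply (Rmult_lt_reg_l (/ lam)). { apply Rinv_0_lt_compat; lra. }
    rewrite <- Rmult_assoc, Rinv_l, Rmult_1_l by lra. unfold Rdiv in H0. rewrite Rmult_comm. lra.
  - destruct (Delta2_cases f xb p s h'') as [Hp|[a1 [b [Hf1 [Hf2 HD2]]]]].
    { rewrite Hp in HD. discriminate. }
    rewrite HD in HD2. injection HD2 as HD2.
    unfold Delta2. rewrite hscal_assoc.
    replace (s / lam * lam) with s by (field; lra). rewrite Hf1, Hf2.
    assert (Heq : (a1 - b - s / lam * inner p (hscal lam h'')) / ((s / lam) ^ 2 / 2) = lam * lam * d).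
    { rewrite inner_scal_r, HD2. field. lra. }
    rewrite Heq. simpl.
    apply Rmult_le_compat_l with (r := lam * lam) in Hdle; [|nra].
    replace (lam * lam * (a + eps / (lam * lam))) with (lam * lam * a + eps) in Hdle by (field; lra). lra.
Qed.

Lemma small_s_le A B C (s0 : R) : s0 > 0 -> (forall s, 0 < s < s0 -> A <= B + s * C) -> A <= B.
Proof.
  intros Hs0 H. apply Rnot_lt_le; intro Hlt.
  set (s := Rmin (s0 / 2) ((A - B) / (2 * (Rabs C + 1)))).
  assert (Hs : 0 < s).
  { apply Rmin_pos; [lra|]. apply Rdiv_lt_0_compat; [lra|]. pose proof (Rabs_pos C); lra. }
  pose proof (Rmin_l (s0 / 2) ((A - B) / (2 * (Rabs C + 1)))) as H1.
  pose proof (Rmin_r (s0 / 2) ((A - B) / (2 * (Rabs C + 1)))) as H2. fold s in H1, H2.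
  specialize (H s ltac:(lra)).
  assert (s * C <= s * Rabs C) by (apply Rmult_le_compat_l; [lra|apply Rle_abs]).
  assert (s * (2 * (Rabs C + 1)) <= A - B).
  { apply Rmult_le_compat_r with (r := 2 * (Rabs C + 1)) in H2; [|pose proof (Rabs_pos C); lra].
    replace ((A - B) / (2 * (Rabs C + 1)) * (2 * (Rabs C + 1))) with (A - B) in H2 by (field; pose proof (Rabs_pos C); lra). lra. }
  pose proof (Rabs_pos C). nra.
Qed.

Lemma prox2 {E : Hilbert} (f : E -> ER) xb p u zeta a :
  f2lower f xb p u = Fin a -> prox_sub (f2lower f xb p) u zeta -> inner zeta u <= 2 * a.
Proof.
  intros Ha [gx [Hgx [sigma [delta [Hs [Hd Hp]]]]]]. rewrite Ha in Hgx. injection Hgx as Hgx. subst a.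
  apply (small_s_le _ _ (gx + sigma / 2 * inner u u) (delta / (hnorm u + 1))).
  { apply Rdiv_lt_0_compat; [lra|]. pose proof (hnorm_pos u); lra. }
  intros s Hs0.
  assert (Hy : hnorm (hsub (hscal (1 + s) u) u) < delta).
  { replace (hsub (hscal (1 + s) u) u) with (hscal s u) by hring. rewrite hnorm_scal, Rabs_pos_eq by lra.
    destruct Hs0 as [Hs1 Hs2]. pose proof (hnorm_pos u).
    apply Rmult_lt_compat_r with (r := hnorm u + 1) in Hs2; [|lra].
    replace (delta / (hnorm u + 1) * (hnorm u + 1)) with delta in Hs2 by (field; lra). nra. }
  specialize (Hp _ Hy).
  pose proof (homog f xb p u gx (1 + s) ltac:(rewrite Ha; simpl; lra) ltac:(lra)) as Hh.
  pose proof (ERle_trans _ _ _ Hp Hh) as Hc. simpl in Hc.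
  replace (hsub (hscal (1 + s) u) u) with (hscal s u) in Hc by hring.
  rewrite hnorm_scal, Rabs_pos_eq in Hc by lra. rewrite inner_scal_r in Hc.
  replace (s * hnorm u * (s * hnorm u * 1)) with (s*s*inner u u) in Hc by (rewrite <- hnorm_sq; ring). idtac.
  assert (Hk : s * inner zeta u <= s * (2 * gx + s * (gx + sigma / 2 * inner u u))) by nra.
  apply Rmult_le_reg_l in Hk; lra.
Qed.

Definition ERaff (x : ER) (al c : R) : ER := match x with Fin a => Fin (al * a + c) | _ => x end.

Lemma lsc_ext {E : Hilbert} (g1 g2 : E -> ER) : (forall y, g1 y = g2 y) -> lsc g1 -> lsc g2.
Proof. intros H Hl x r Hr. rewrite <- H in Hr. destruct (Hl x r Hr) as [d [Hd Hd']]. exists d. split; auto. intros. rewrite <- H. auto. Qed.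

Lemma contR_inner {E : Hilbert} (a : E) : contR (fun y => inner a y).
Proof.
  intros y eps He. exists (eps / (hnorm a + 1)). split.
  { apply Rdiv_lt_0_compat; pose proof (hnorm_pos a); lra. }
  intros y' Hy'. replace (inner a y' - inner a y) with (inner a (hsub y' y)) by (rewrite inner_sub_r; ring).
  eapply Rle_lt_trans; [apply CS|]. pose proof (hnorm_pos a). pose proof (hnorm_pos (hsub y' y)).
  apply Rle_lt_trans with ((hnorm a + 1) * hnorm (hsub y' y)); [nra|].
  apply Rmult_lt_compat_l with (r := hnorm a + 1) in Hy'; [|lra].
  replace ((hnorm a + 1) * (eps / (hnorm a + 1))) with eps in Hy' by (field; lra). lra.
Qed.

Lemma lsc_aff {E : Hilbert} (g : E -> ER) (xb : E) t al (beta : E -> R) :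
  lsc g -> t > 0 -> al > 0 -> contR beta -> lsc (fun y => ERaff (g (hadd xb (hscal t y))) al (beta y)).
Proof.
  intros Hg Ht Hal Hb x r Hr.
  set (c0 := (r - beta x) / al).
  assert (Hm : exists c1, c0 < c1 /\ ERlt (Fin c1) (g (hadd xb (hscal t x)))).
  { destruct (g (hadd xb (hscal t x))) as [a| |] eqn:Hgx; simpl in Hr.
    - destruct Hr as [Hr0 Hne]. simpl in Hr0. assert (Hr : r < al * a + beta x).
      { destruct (Rle_lt_or_eq_dec _ _ Hr0) as [|He]; auto. exfalso; apply Hne; rewrite He; reflexivity. }
      exists ((c0 + a) / 2).
      assert (c0 < a).
      { unfold c0. apply (Rmult_lt_reg_l al); auto. replace (al * ((r - beta x) / al)) with (r - beta x) by (field; lra). lra. }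
      split; [lra|]. split; simpl; [lra|]. intro Heq; injection Heq; lra.
    - exists (c0 + 1). split; [lra|]. split; simpl; auto. discriminate.
    - destruct Hr as [Hr _]. simpl in Hr. contradiction. }
  destruct Hm as [c1 [Hc1 Hlt]].
  destruct (Hg _ _ Hlt) as [d1 [Hd1 Hd1']].
  destruct (Hb x (al * (c1 - c0))) as [d2 [Hd2 Hd2']]. { nra. }
  exists (Rmin (d1 / t) d2). split. { apply Rmin_pos; [apply Rdiv_lt_0_compat|]; lra. }
  intros y Hy. pose proof (Rmin_l (d1 / t) d2); pose proof (Rmin_r (d1 / t) d2).
  assert (Hyt : hnorm (hsub (hadd xb (hscal t y)) (hadd xb (hscal t x))) < d1).
  { replace (hsub (hadd xb (hscal t y)) (hadd xb (hscal t x))) with (hscal t (hsub y x)) by hring.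
    rewrite hnorm_scal, Rabs_pos_eq by lra.
    apply Rmult_lt_compat_l with (r := t) in Hy; [|lra].
    assert (t * Rmin (d1 / t) d2 <= d1).
    { apply Rle_trans with (t * (d1 / t)); [apply Rmult_le_compat_l; lra|]. right; field; lra. }
    lra. }
  specialize (Hd1' _ Hyt). specialize (Hd2' y ltac:(lra)). apply Rabs_def2 in Hd2'.
  destruct Hd1' as [Hd1' Hne].
  destruct (g (hadd xb (hscal t y))) as [a'| |]; simpl in *.
  - split; simpl.
    + assert (al * c1 <= al * a') by (apply Rmult_le_compat_l; lra).
      assert (al * c0 = r - beta x) by (unfold c0; field; lra). lra.
    + intro Heq; injection Heq. intro.
      assert (al * c1 <= al * a') by (apply Rmult_le_compat_l; lra).
      assert (al * c0 = r - beta x) by (unfold c0; field; lra).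
      assert (a' <> c1) by (intro; subst; apply Hne; reflexivity). nra.
  - split; simpl; auto. discriminate.
  - contradiction.
Qed.

Lemma lsc_ball {E : Hilbert} (H : E -> ER) u rho : lsc H ->
  lsc (fun y => if Rle_dec (hnorm (hsub y u)) rho then H y else PInf).
Proof.
  intros HH x r Hr. destruct (Rle_dec (hnorm (hsub x u)) rho) as [Hin|Hout].
  - destruct (HH x r Hr) as [d [Hd Hd']]. exists d. split; auto. intros y Hy.
    destruct (Rle_dec (hnorm (hsub y u)) rho); auto. split; simpl; auto. discriminate.
  - exists (hnorm (hsub x u) - rho). split; [lra|]. intros y Hy.
    destruct (Rle_dec (hnorm (hsub y u)) rho) as [Hyin|]; [|split; simpl; auto; discriminate].
    exfalso. pose proof (hnorm_tri x y u). rewrite hnorm_sub_sym in Hy. lra.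
Qed.

Definition Gn {E : Hilbert} (f : E -> ER) xb p t u rho (q : E -> R) (y : E) : ER :=
  if Rle_dec (hnorm (hsub y u)) rho then ERplus (Delta2 f xb p t y) (q y) else PInf.

Lemma Gn_lsc {E : Hilbert} (f : E -> ER) xb p t u rho q b :
  (forall x, f x <> MInf) -> lsc f -> f xb = Fin b -> t > 0 -> contR q -> lsc (Gn f xb p t u rho q).
Proof.
  intros HnM Hf Hb Ht Hq. unfold Gn. apply lsc_ball.
  apply (lsc_ext (fun y => ERaff (f (hadd xb (hscal t y))) (/ (t ^ 2 / 2)) ((- b - t * inner p y) / (t ^ 2 / 2) + q y))).
  - intro y. unfold Delta2. rewrite Hb. specialize (HnM (hadd xb (hscal t y))).
    destruct (f (hadd xb (hscal t y))); simpl; try reflexivity; try tauto.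
    f_equal. field. lra.
  - apply lsc_aff; auto.
    + apply Rinv_0_lt_compat. simpl. nra.
    + apply contR_plus; auto. apply (contR_ext (fun y => / (t^2/2) * (- b) + (- t / (t^2/2)) * inner p y)).
      { intro y. field. simpl; nra. }
      apply contR_plus; [apply contR_const|]. apply contR_scal, contR_inner.
Qed.

Lemma Delta2_nomin {E : Hilbert} (f : E -> ER) xb p t y : Delta2 f xb p t y <> MInf.
Proof. unfold Delta2. destruct (f (hadd xb (hscal t y))), (f xb); discriminate. Qed.

Lemma Gn_nomin {E : Hilbert} (f : E -> ER) xb p t u rho q y : Gn f xb p t u rho q y <> MInf.
Proof.
  unfold Gn. destruct (Rle_dec _ _); [|discriminate]. pose proof (Delta2_nomin f xb p t y).
  destruct (Delta2 f xb p t y); simpl; congruence.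
Qed.

Lemma weak_sub {E : Hilbert} (y : nat -> E) l th : weak_conv y l -> sincr th -> weak_conv (fun k => y (th k)) l.
Proof. intros H Ht v. apply (cv_sub (fun n => inner (y n) v)); auto. apply sincr_ge; auto. Qed.

Lemma two_inner_le {E : Hilbert} (a b : E) : 2 * inner a b <= inner a a + inner b b.
Proof.
  pose proof (inner_pos (hsub a b)). rewrite inner_sub_l, !inner_sub_r, (inner_sym b a) in H. lra.
Qed.

Definition Upick {E : Hilbert} (P : nat -> E -> Prop) (u : E) (N : nat) : nat * E :=
  epsilon (inhabits (0%nat, u)) (fun ny => (N <= fst ny)%nat /\ P (fst ny) (snd ny)).
Fixpoint Useq {E : Hilbert} (P : nat -> E -> Prop) (u : E) (k : nat) : nat * E :=
  match k with O => Upick P u O | S k => Upick P u (S (fst (Useq P u k))) end.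

Lemma claimU {E : Hilbert} (f : E -> ER) xb p psi u zeta a sigma delta :
  MoscoHyp f xb p psi -> sigma > 0 -> delta > 0 ->
  (forall y, hnorm (hsub y u) < delta ->
      ERle (Fin (a + inner zeta (hsub y u) - sigma / 2 * (hnorm (hsub y u)) ^ 2)) (f2lower f xb p y)) ->
  forall eta, eta > 0 -> exists N, forall n, (N <= n)%nat -> forall y, hnorm (hsub y u) <= delta / 2 ->
    ERle (Fin (a - inner zeta u - eta + sigma / 4 * inner (hsub y u) (hsub y u)))
         (ERplus (Delta2 f xb p (/ (INR n + 1)) y) (- inner zeta y + sigma * inner (hsub y u) (hsub y u))).
Proof.
  intros HM Hs Hd Hprox eta He. apply NNPP; intro Hn.
  set (rho := delta / 2).
  set (P := fun n y => hnorm (hsub y u) <= rho /\ ~ ERle (Fin (a - inner zeta u - eta + sigma / 4 * inner (hsub y u) (hsub y u)))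
         (ERplus (Delta2 f xb p (/ (INR n + 1)) y) (- inner zeta y + sigma * inner (hsub y u) (hsub y u)))).
  assert (HP : forall N, (N <= fst (Upick P u N))%nat /\ P (fst (Upick P u N)) (snd (Upick P u N))).
  { intro N. unfold Upick. apply epsilon_spec. apply NNPP; intro H2. apply Hn. exists N. intros n Hn' y Hy.
    apply NNPP; intro H3. apply H2. exists (n, y). simpl. split; auto. split; auto. }
  set (nk := fun k => fst (Useq P u k)). set (yk := fun k => snd (Useq P u k)).
  assert (HPk : forall k, P (nk k) (yk k)) by (intro k; unfold nk, yk; destruct k; simpl; apply HP).
  assert (Hnk : sincr nk).
  { intro k. unfold nk. simpl. destruct (HP (S (fst (Useq P u k)))). lia. }
  assert (Hviol : forall k, exists d, Delta2 f xb p (/ (INR (nk k) + 1)) (yk k) = Fin d /\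
      d + (- inner zeta (yk k) + sigma * inner (hsub (yk k) u) (hsub (yk k) u)) <
      a - inner zeta u - eta + sigma / 4 * inner (hsub (yk k) u) (hsub (yk k) u)).
  { intro k. destruct (HPk k) as [_ Hv]. pose proof (Delta2_nomin f xb p (/ (INR (nk k) + 1)) (yk k)).
    destruct (Delta2 f xb p (/ (INR (nk k) + 1)) (yk k)) as [d| |]; simpl in Hv.
    - exists d. split; auto. lra.
    - exfalso; auto.
    - congruence. }
  assert (Hbd : forall k, hnorm (yk k) <= hnorm u + rho).
  { intro k. destruct (HPk k) as [Hk _]. pose proof (hnorm_tri (yk k) u hzero). rewrite !hnorm_sub0 in H. lra. }
  destruct (weak_compact yk _ Hbd) as [phi1 [yb [Hphi1 Hw]]].
  destruct (bw_sub (fun j => inner (hsub (yk (phi1 j)) u) (hsub (yk (phi1 j)) u)) (rho * rho)) as [phi2 [Lq [Hphi2 HLq]]].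
  { intro j. rewrite Rabs_pos_eq by apply inner_pos. rewrite <- hnorm_sq. destruct (HPk (phi1 j)) as [Hk _].
    pose proof (hnorm_pos (hsub (yk (phi1 j)) u)). nra. }
  set (idx := fun j => phi1 (phi2 j)).
  assert (Hidx : sincr idx) by exact (sincr_comp phi1 phi2 Hphi1 Hphi2).
  set (y' := fun j => yk (idx j)).
  assert (Hw' : weak_conv y' yb) by (apply (weak_sub (fun j => yk (phi1 j))); auto).
  set (rL := a - inner zeta u - eta + inner zeta yb - 3 * sigma / 4 * Lq).
  assert (Hepi : epi psi (yb, rL)).
  { destruct (HM _ tn_pos tn_cv (yb, rL)) as [_ [_ H2]]. apply H2.
    exists (fun j => nk (idx j)), (fun j => (y' j, a - inner zeta u - eta + inner zeta (y' j) - 3 * sigma / 4 * inner (hsub (y' j) u) (hsub (y' j) u))).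
    split; [apply sincr_comp; auto|]. split; [|split].
    - intro j. unfold epi, y', idx. simpl. destruct (Hviol (phi1 (phi2 j))) as [d [Hd1 Hd2]].
      rewrite Hd1. simpl. lra.
    - simpl. exact Hw'.
    - simpl. unfold rL. apply CV_minus; [apply CV_plus; [apply CV_const|]|].
      + eapply Un_cv_ext; [intro; apply inner_sym|]. rewrite inner_sym. apply Hw'.
      + apply CV_mult; [apply CV_const|]. exact HLq. }
  pose proof (phi_le_psi f xb p psi yb rL HM Hepi) as Hphi.
  set (nq := inner (hsub yb u) (hsub yb u)).
  assert (HLq0 : 0 <= Lq).
  { apply (lim_ge_ev _ _ _ HLq). exists O. intros; apply inner_pos. }
  assert (HLqr : Lq <= rho * rho).
  { apply (lim_le_ev _ _ _ HLq). exists O. intros j _. rewrite <- hnorm_sq. destruct (HPk (phi1 (phi2 j))) as [Hk _].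
    pose proof (hnorm_pos (hsub (yk (phi1 (phi2 j))) u)). nra. }
  assert (Hnq : nq <= Lq).
  { assert (Hc : Un_cv (fun j => 2 * inner (hsub (y' j) u) (hsub yb u)) (2 * nq)).
    { apply CV_mult; [apply CV_const|]. unfold nq. eapply Un_cv_ext; [intro; symmetry; apply inner_sub_l|].
      rewrite inner_sub_l. apply CV_minus; [apply Hw'|apply CV_const]. }
    assert (Hc2 : Un_cv (fun j => inner (hsub (y' j) u) (hsub (y' j) u) + nq) (Lq + nq)).
    { apply CV_plus; [exact HLq|apply CV_const]. }
    pose proof (Rle_cv_lim (fun j => two_inner_le (hsub (y' j) u) (hsub yb u)) Hc Hc2). lra. }
  assert (Hyb : hnorm (hsub yb u) < delta).
  { apply hnorm_lt_sq; [lra|]. fold nq. unfold rho in HLqr. nra. }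
  specialize (Hprox yb Hyb). pose proof (ERle_trans _ _ _ Hprox Hphi) as Hfin. simpl in Hfin.
  rewrite inner_sub_r in Hfin. replace (hnorm (hsub yb u) * (hnorm (hsub yb u) * 1)) with nq in Hfin by (unfold nq; rewrite <- hnorm_sq; ring).
  unfold rL in Hfin.
  assert (sigma * nq <= sigma * Lq) by (apply Rmult_le_compat_l; lra).
  assert (0 <= sigma * Lq) by (apply Rmult_le_pos; lra).
  lra.
Qed.

Lemma keyK {E : Hilbert} (f : E -> ER) xb p psi b u zeta :
  (forall x, f x <> MInf) -> lsc f -> f xb = Fin b -> MoscoHyp f xb p psi ->
  prox_sub (f2lower f xb p) u zeta ->
  forall eps N0, eps > 0 -> exists n v z, (N0 <= n)%nat /\ hnorm (hsub v u) < eps /\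
     hnorm (hsub z (hscal (/2) zeta)) < eps /\
     prox_sub f (hadd xb (hscal (/ (INR n + 1)) v)) (hadd p (hscal (/ (INR n + 1)) z)).
Proof.
  intros HnM Hf Hb HM [a [Ha [sigma [delta [Hs [Hd Hprox]]]]]] eps N0 Heps.
  set (rho := delta / 2).
  set (q := fun y => - inner zeta y + sigma * inner (hsub y u) (hsub y u)).
  assert (Hqc : contR q).
  { unfold q. apply contR_plus. - apply (contR_ext (fun y => -1 * inner zeta y)); [intro; ring|]. apply contR_scal, contR_inner.
    - apply contR_scal, contR_nsq. }
  set (m := a - inner zeta u).
  set (theta := Rmin eps (Rmin (rho / 2) (eps / (4 * sigma)))).
  assert (Hth : theta > 0).
  { unfold theta, rho. apply Rmin_pos; [lra|]. apply Rmin_pos; [lra|]. apply Rdiv_lt_0_compat; lra. }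
  assert (Hth1 : theta <= eps) by apply Rmin_l.
  assert (Hth2 : theta <= rho / 2) by (eapply Rle_trans; [apply Rmin_r|apply Rmin_l]).
  assert (Hth3 : theta <= eps / (4 * sigma)) by (eapply Rle_trans; [apply Rmin_r|apply Rmin_r]).
  set (eta := sigma * theta * theta / 16).
  assert (Heta : eta > 0) by (unfold eta; apply Rdiv_lt_0_compat; [apply Rmult_lt_0_compat; nra|lra]).
  destruct (claimU f xb p psi u zeta a sigma delta HM Hs Hd Hprox eta Heta) as [N1 HU].
  assert (Hpsi : ERle (psi u) (Fin a)) by (apply (psi_le_phi f xb p psi u a HM); rewrite Ha; simpl; lra).
  destruct (HM _ tn_pos tn_cv (u, a)) as [[Hrec _] _].
  destruct (Hrec Hpsi) as [zs [Hzs [Hzf Hzsn]]]. simpl in Hzf, Hzsn.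
  assert (Hqcv : Un_cv (fun n => snd (zs n) + q (fst (zs n))) m).
  { assert (Hq0 : q u = - inner zeta u) by (unfold q; rewrite <- hnorm_sq, hnorm_sub_self; ring).
    unfold m. replace (a - inner zeta u) with (a + q u) by (rewrite Hq0; ring).
    apply CV_plus; auto. intros e He. destruct (Hqc u e He) as [d [Hd0 Hd']].
    destruct (Hzf d Hd0) as [N HN]. exists N. intros n Hn. apply Hd'. apply HN; lia. }
  destruct (Hzf rho ltac:(unfold rho; lra)) as [N2 HN2].
  destruct (cv_ev _ _ (m - 1) (m + eta) Hqcv ltac:(lra)) as [N3 HN3].
  set (n := max N0 (max N1 (max N2 N3))).
  assert (Hn0 : (N0 <= n)%nat) by (unfold n; lia).
  specialize (HU n ltac:(unfold n; lia)). specialize (HN2 n ltac:(unfold n; lia)). specialize (HN3 n ltac:(unfold n; lia)).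
  set (t := / (INR n + 1)). assert (Ht : t > 0) by apply tn_pos.
  set (uh := fst (zs n)). set (rh := snd (zs n)). fold uh rh in HN2, HN3.
  pose proof (Hzs n) as Hep. unfold epi in Hep. fold uh rh in Hep. change (/ (INR n + 1)) with t in Hep, HU.
  destruct (Delta2 f xb p t uh) as [dh| |] eqn:Hdh; simpl in Hep; try contradiction.
  2:{ exfalso; exact (Delta2_nomin f xb p t uh Hdh). }
  set (G := Gn f xb p t u rho q).
  assert (HGuh : G uh = Fin (dh + q uh)).
  { unfold G, Gn. destruct (Rle_dec (hnorm (hsub uh u)) rho) as [|Hno]; [|exfalso; lra]. rewrite Hdh. reflexivity. }
  assert (Hlow : forall y, ERle (Fin (m - eta)) (G y)).
  { intro y. unfold G, Gn. destruct (Rle_dec (hnorm (hsub y u)) rho) as [Hy|]; [|simpl; auto].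
    eapply ERle_trans; [|apply (HU y Hy)]. simpl. pose proof (inner_pos (hsub y u)).
    assert (0 <= sigma / 4 * inner (hsub y u) (hsub y u)) by (apply Rmult_le_pos; lra). unfold m. lra. }
  destruct (VP G (m - eta) (dh + q uh) (eps / 2) uh) as [v [gv [xi [S [HGv [Hgv [Hxi [HS HVP]]]]]]]].
  { intro; apply Gn_nomin. } { apply (Gn_lsc f xb p t u rho q b HnM Hf Hb Ht Hqc). } { exact Hlow. } { exact HGuh. } { lra. }
  unfold G, Gn in HGv. destruct (Rle_dec (hnorm (hsub v u)) rho) as [Hvin|]; [|discriminate].
  destruct (Delta2 f xb p t v) as [dv| |] eqn:Hdv; simpl in HGv; try discriminate. injection HGv as HGv.
  specialize (HU v Hvin). rewrite Hdv in HU. simpl in HU.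
  assert (Hvu2 : inner (hsub v u) (hsub v u) < theta * theta).
  { assert (sigma / 4 * inner (hsub v u) (hsub v u) < 2 * eta).
    { unfold m in HN3. unfold q in HGv. lra. }
    unfold eta in H.
    pose proof (inner_pos (hsub v u)).
    apply (Rmult_lt_reg_l (sigma / 4)); [lra|]. nra. }
  assert (Hvu : hnorm (hsub v u) < theta) by (apply hnorm_lt_sq; lra).
  destruct (Delta2_cases f xb p t v) as [Hp|[fx [b' [Hfx [Hb' Hdv']]]]]; [congruence|].
  rewrite Hb in Hb'. injection Hb' as <-. rewrite Hdv in Hdv'. injection Hdv' as Hdv'.
  set (e := hsub v u).
  set (z := hscal (/2) (hadd (hadd xi zeta) (hscal (-2 * sigma) e))).
  exists n, v, z. change (/ (INR n + 1)) with t. split; [auto|]. split; [lra|]. split.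
  { replace (hsub z (hscal (/2) zeta)) with (hscal (/2) (hadd xi (hscal (-2 * sigma) e))) by (unfold z; hring).
    rewrite hnorm_scal, Rabs_pos_eq by lra.
    pose proof (hnorm_add xi (hscal (-2 * sigma) e)). rewrite hnorm_scal in H.
    replace (Rabs (-2 * sigma)) with (2 * sigma) in H by (rewrite Rabs_left; lra).
    assert (2 * sigma * hnorm e <= 2 * sigma * theta) by (apply Rmult_le_compat_l; [lra|]; apply Rlt_le; exact Hvu).
    assert (2 * sigma * theta <= eps / 2).
    { apply Rmult_le_compat_l with (r := 2 * sigma) in Hth3; [|lra].
      replace (2 * sigma * (eps / (4 * sigma))) with (eps / 2) in Hth3 by (field; lra). lra. }
    lra. }
  exists fx. split; [exact Hfx|]. exists (S / 2 + sigma), (t * rho / 2). split; [lra|]. split.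
  { unfold rho. apply Rmult_lt_0_compat; [apply Rmult_lt_0_compat|]; lra. }
  intros x' Hx'.
  set (d := hsub x' (hadd xb (hscal t v))).
  set (y := hadd v (hscal (/ t) d)).
  assert (Hx'y : x' = hadd xb (hscal t y)).
  { apply hext. intro w. unfold y, d. iexp. field. lra. }
  assert (Hyv : hsub y v = hscal (/ t) d) by (unfold y; hring).
  assert (Hyvn : hnorm (hsub y v) < rho / 2).
  { rewrite Hyv, hnorm_scal, Rabs_pos_eq by (apply Rlt_le, Rinv_0_lt_compat; lra).
    apply (Rmult_lt_reg_l t); [lra|]. rewrite <- Rmult_assoc, Rinv_r, Rmult_1_l by lra. unfold d. lra. }
  assert (Hyin : hnorm (hsub y u) <= rho).
  { pose proof (hnorm_tri y v u). lra. }
  destruct (f x') as [fx'| |] eqn:Hfx'; cbn [ERle]; auto.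
  2:{ exfalso; exact (HnM x' Hfx'). }
  specialize (HVP y). unfold G, Gn in HVP. destruct (Rle_dec (hnorm (hsub y u)) rho) as [_|]; [|contradiction].
  unfold Delta2 in HVP. rewrite <- Hx'y, Hfx', Hb in HVP. cbn [ERle ERplus] in HVP.
  assert (E1 : hsub y u = hadd e (hscal (/ t) d)) by (unfold y, e; hring).
  assert (Hqy : q y = - (inner zeta v + / t * inner zeta d) + sigma * (inner e e + 2 * / t * inner e d + / t * / t * inner d d)).
  { unfold q. rewrite E1. unfold y. rewrite inner_add_r, inner_scal_r.
    rewrite !inner_add_l, !inner_add_r, !inner_scal_l, !inner_scal_r, (inner_sym d e). ring. }
  assert (Hqv : q v = - inner zeta v + sigma * inner e e) by reflexivity.
  assert (Hpy : inner p y = inner p v + / t * inner p d) by (unfold y; rewrite inner_add_r, inner_scal_r; ring).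
  assert (Hxiy : inner xi (hsub y v) = / t * inner xi d) by (rewrite Hyv, inner_scal_r; ring).
  assert (Hny : hnorm (hsub y v) ^ 2 = / t * / t * inner d d) by (rewrite hnorm_pow2, Hyv, inner_scal_l, inner_scal_r; ring).
  assert (Hz : inner (hadd p (hscal t z)) d = inner p d + t * / 2 * (inner xi d + inner zeta d + -2 * sigma * inner e d)).
  { unfold z. rewrite !inner_add_l, !inner_scal_l, !inner_add_l, !inner_scal_l. ring. }
  rewrite Hxiy, Hny, Hqy, Hpy in HVP. rewrite Hz, hnorm_pow2. fold d.
  rewrite <- HGv, Hqv, Hdv' in HVP.
  replace (t * (t * 1) / 2) with (t ^ 2 / 2) in HVP by (simpl; ring).
  set (K := t ^ 2 / 2). assert (HK : K > 0) by (unfold K; simpl; nra).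
  assert (Hfin : fx' - (fx + (inner p d + t * / 2 * (inner xi d + inner zeta d + -2 * sigma * inner e d)) - (S / 2 + sigma) / 2 * inner d d)
     = K * (((fx' - b - t * (inner p v + / t * inner p d)) / (t ^ 2 / 2) +
          (- (inner zeta v + / t * inner zeta d) + sigma * (inner e e + 2 * / t * inner e d + / t * / t * inner d d))) -
          ((fx - b - t * inner p v) / (t ^ 2 / 2) + (- inner zeta v + sigma * inner e e) + / t * inner xi d - S / 2 * (/ t * / t * inner d d)))).
  { unfold K. field. lra. }
  assert (0 <= K * (((fx' - b - t * (inner p v + / t * inner p d)) / (t ^ 2 / 2) +
          (- (inner zeta v + / t * inner zeta d) + sigma * (inner e e + 2 * / t * inner e d + / t * / t * inner d d))) -
          ((fx - b - t * inner p v) / (t ^ 2 / 2) + (- inner zeta v + sigma * inner e e) + / t * inner xi d - S / 2 * (/ t * / t * inner d d)))).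
  { apply Rmult_le_pos; lra. }
  lra.
Qed.

Definition Ksel {E : Hilbert} (f : E -> ER) xb p u zeta (j : nat) : nat * E * E :=
  epsilon (inhabits (0%nat, u, u)) (fun nvz => let '(n, v, z) := nvz in
     (j <= n)%nat /\ hnorm (hsub v u) < / (INR j + 1) /\ hnorm (hsub z (hscal (/2) zeta)) < / (INR j + 1) /\
     prox_sub f (hadd xb (hscal (/ (INR n + 1)) v)) (hadd p (hscal (/ (INR n + 1)) z))).

Lemma TM_from_prox {E : Hilbert} (f : E -> ER) xb p psi b u zeta :
  (forall x, f x <> MInf) -> lsc f -> f xb = Fin b -> MoscoHyp f xb p psi ->
  prox_sub (f2lower f xb p) u zeta -> T_M f xb p u (hscal (/2) zeta).
Proof.
  intros HnM Hf Hb HM Hpr.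
  assert (Hs : forall j, let '(n, v, z) := Ksel f xb p u zeta j in
     (j <= n)%nat /\ hnorm (hsub v u) < / (INR j + 1) /\ hnorm (hsub z (hscal (/2) zeta)) < / (INR j + 1) /\
     prox_sub f (hadd xb (hscal (/ (INR n + 1)) v)) (hadd p (hscal (/ (INR n + 1)) z))).
  { intro j. unfold Ksel. apply (epsilon_spec (inhabits (0%nat, u, u)) (fun nvz => let '(n, v, z) := nvz in _)).
    destruct (keyK f xb p psi b u zeta HnM Hf Hb HM Hpr (/ (INR j + 1)) j (tn_pos j)) as [n [v [z H]]].
    exists (n, v, z). exact H. }
  set (nn := fun j => fst (fst (Ksel f xb p u zeta j))).
  set (vv := fun j => snd (fst (Ksel f xb p u zeta j))).
  set (zz := fun j => snd (Ksel f xb p u zeta j)).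
  assert (Hs' : forall j, (j <= nn j)%nat /\ hnorm (hsub (vv j) u) < / (INR j + 1) /\
     hnorm (hsub (zz j) (hscal (/2) zeta)) < / (INR j + 1) /\
     prox_sub f (hadd xb (hscal (/ (INR (nn j) + 1)) (vv j))) (hadd p (hscal (/ (INR (nn j) + 1)) (zz j)))).
  { intro j. specialize (Hs j). unfold nn, vv, zz. destruct (Ksel f xb p u zeta j) as [[n v] z]. exact Hs. }
  exists (fun j => / (INR (nn j) + 1)), vv, zz. split; [intro; apply tn_pos|]. split; [|split; [|split]].
  - intros eps He. destruct (inv_n_small eps He) as [N HN]. exists N. intros j Hj. unfold Rdist.
    rewrite Rminus_0_r, Rabs_pos_eq by (apply Rlt_le, tn_pos). apply HN. specialize (Hs' j). lia.
  - intros eps He. destruct (inv_n_small eps He) as [N HN]. exists N. intros j Hj.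
    eapply Rlt_trans; [apply (Hs' j)|]. apply HN; lia.
  - apply norm_conv_weak. intros eps He. destruct (inv_n_small eps He) as [N HN]. exists N. intros j Hj.
    eapply Rlt_trans; [apply (Hs' j)|]. apply HN; lia.
  - intro j. apply (Hs' j).
Qed.

Theorem proposition4p2 (E : Hilbert) (f : E -> ER) (xb p : E)
  (hf_nomin : forall x, f x <> MInf)
  (hf_lsc : lsc f)
  (hxb : exists r, f xb = Fin r)
  (hp : prox_sub f xb p)
  (hepi : twice_epi_diff_Mosco f xb p) :
  forall h : E, dom_lim_sub (f2lower f xb p) h ->
  forall w : E, d2_M f xb p h w ->
    ERle (Fin (inner w h)) (f2lower f xb p h).
Proof.
  intros h [zeta [gx [Hgx [xn [zn [gxn [Hxn [Hgxn [Hcv [Hwz Hpn]]]]]]]]]] w Hw.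
  destruct hepi as [psi [_ HM]]. destruct hxb as [b Hb].
  destruct (weak_bounded zn zeta Hwz) as [B HB].
  assert (HB0 : 0 <= B) by (eapply Rle_trans; [apply (hnorm_pos (zn O))|apply HB]).
  assert (Hk : forall k, inner w (xn k) <= gxn k + / 2 * B * hnorm (hsub (xn k) h)).
  { intro k.
    pose proof (TM_from_prox f xb p psi b (xn k) (zn k) hf_nomin hf_lsc Hb HM (Hpn k)) as HT.
    specialize (Hw _ _ HT). rewrite inner_scal_l, inner_scal_r in Hw.
    pose proof (prox2 f xb p (xn k) (zn k) (gxn k) (Hgxn k) (Hpn k)) as H2.
    assert (Hsplit : inner h (zn k) = inner (zn k) (xn k) + inner (zn k) (hsub h (xn k))).
    { rewrite inner_sub_r, inner_sym. ring. }
    pose proof (inner_le (zn k) (hsub h (xn k))). rewrite hnorm_sub_sym in H.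
    assert (hnorm (zn k) * hnorm (hsub (xn k) h) <= B * hnorm (hsub (xn k) h)).
    { apply Rmult_le_compat_r; [apply hnorm_pos|apply HB]. }
    lra. }
  rewrite Hgx. simpl.
  apply (Rle_cv_lim Hk).
  - eapply Un_cv_ext; [intro; apply inner_sym|]. rewrite inner_sym. apply norm_conv_inner; auto.
  - replace gx with (gx + / 2 * B * 0) by ring. apply CV_plus; auto. apply CV_mult; [apply CV_const|].
    intros eps He. destruct (Hxn eps He) as [N HN]. exists N. intros n Hn. unfold Rdist.
    rewrite Rminus_0_r, Rabs_pos_eq by apply hnorm_pos. apply HN; auto.
Qed.
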